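(* Consider algorithm DIST-OPT as described in the context with all delays bounded by $\tau_{\max}$, and let $\boldsymbol\lambda(t)=(\underline\lambda(t),\bar\lambda(t))\in\mathbb R^{2N}$ be its dual iterates, with the convention $\boldsymbol\lambda(s)=0$ for $s<0$. Define $$g(t)=\begin{bmatrix}\underline v-v(p(t),q(t))\\ v(p(t),q(t))-\bar v\end{bmatrix}.$$ Then for all $t\in\mathbb N$, $$\|\nabla D(\boldsymbol\lambda(t))-g(t)\|\le L\sqrt N\sum_{\tau=t-t_0}^{t-1}\|\boldsymbol\lambda(\tau)-\boldsymbol\lambda(\tau+1)\|,$$ where $t_0=d(\tau_{\max}+1)$ and $L=2(\|R\|^2+\|X\|^2)/a_{\min}$.
   Context: Network: a radial network is a tree on nodes $\{0,1,\dots,N\}$ rooted at node $0$; $\mathcal N=\{1,\dots,N\}$. Each $i\in\mathcal N$ has a unique parent $\sigma_i\in\{0,\dots,N\}$. Each edge $(h,k)$ ($h$ the parent of $k$) has resistance $r_{hk}\ge0$ and reactance $x_{hk}\ge0$. $\mathcal P_i$ is the set of edges on the path from $0$ to $i$. Define $N\times N$ matrices $R_{ij}=2\sum_{(h,k)\in\mathcal P_i\cap\mathcal P_j}r_{hk}$ and $X_{ij}=2\sum_{(h,k)\in\mathcal P_i\cap\mathcal P_j}x_{hk}$. $\texttt{dist}(i,j)$ is the number of edges on the tree path between $i$ and $j$, and $d=\max_{i,j\in\mathcal N}\texttt{dist}(i,j)$. Voltage model: $v(p,q)=Rp+Xq+v_0\mathbf 1\in\mathbb R^N$ for a fixed $v_0\in\mathbb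 R$. $\|\cdot\|$ is the Euclidean norm on vectors and the spectral norm on matrices. Problem (P): given vectors $\underline v\le\bar v$, $\underline p\le\bar p$, $\underline q\le\bar q$ in $\mathbb R^N$ and reals $a_i^{P},a_i^{Q}>0$, $b_i^P,b_i^Q,c_i^P,c_i^Q$, minimize over $p,q\in\mathbb R^N$ the cost $C^P(p)+C^Q(q)$, where $C^P(p)=\sum_{i}(\tfrac{a_i^P}{2}p_i^2+b_i^Pp_i+c_i^P)$, $C^Q(q)=\sum_{i}(\tfrac{a_i^Q}{2}q_i^2+b_i^Qq_i+c_i^Q)$, subject to $\underline v\le v(p,q)\le\bar v$, $\underline p\le p\le\bar p$, $\underline q\le q\le\bar q$. Let $a_{\min}=\min\{a_1^P,\dots,a_N^P,a_1^Q,\dots,a_N^Q\}$. The dual function is $D(\boldsymbol\lambda)=\min_{(p,q)\in[\underline p,\bar p]\times[\underline q,\bar q]}\bigl[C^P(p)+C^Q(q)+\underline\lambda^\top(\underline v-v(p,q))+\bar\lambda^\top(v(p,q)-\bar v)\bigr]$ for $\boldsymbol\lambda=(\underline\lambda,\bar\lambda)\in\mathbb R^{2N}$; it is differentiable. Algorithm DIST-OPT. For $i\in\mathcal N$, the algorithmic parent of $i$ is $\sigma_i$ if $\sigma_i\neq0$; if $\sigma_i=0$, $i$ has no algorithmic parent. Let $\mathcal C_i=\{j\in\mathcal N:\sigma_j=i\}$. For each $j\in\mathcal N$ having an algorithmic parent and each $t\in\mathbb N$, there are delays $\tau^{\uparrow}_j(t),\tau^{\downarrow}_j(t)\in\mathbb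 Z_{\ge0}$. Write $[x]_a^b=\min(\max(x,a),b)$ and $\lceil x\rceil_+=\max(x,0)$. Initialization ($t=0$): for all $i\in\mathcal N$, $z_i^P(0)=z_i^Q(0)=\underline\lambda_i(0)=\bar\lambda_i(0)=\lambda_i(0)=0$ and $\alpha_i(0)=\beta_i^P(0)=\beta_i^Q(0)=\hat\alpha_i(0)=\hat\beta_i^P(0)=\hat\beta_i^Q(0)=0$; any message $\alpha_i(s),\beta_i^P(s),\beta_i^Q(s)$ with $s<0$ is $0$; if $i$ has no algorithmic parent then $\hat\beta_i^P(t)=\hat\beta_i^Q(t)=0$ for all $t$. For $t=0,1,2,\dots$ and every $i\in\mathcal N$: (1) $p_i(t)=\bigl[(z_i^P(t)-b_i^P)/a_i^P\bigr]_{\underline p_i}^{\bar p_i}$ and $q_i(t)=\bigl[(z_i^Q(t)-b_i^Q)/a_i^Q\bigr]_{\underline q_i}^{\bar q_i}$. (2) $v(t)=v(p(t),q(t))$; $\underline\lambda_i(t+1)=\lceil\underline\lambda_i(t)+\gamma(\underline v_i-v_i(t))\rceil_+$, $\bar\lambda_i(t+1)=\lceil\bar\lambda_i(t)+\gamma(v_i(t)-\bar v_i)\rceil_+$, $\lambda_i(t+1)=\underline\lambda_i(t+1)-\bar\lambda_i(t+1)$, with step size $\gamma>0$. (3) $\alpha_i(t+1)=\lambda_i(t+1)+\sum_{j\in\mathcal C_i}\hat\alpha_j(t)$, and for each $j\in\mathcal C_i$: $\beta_j^P(t+1)=R_{ii}\bigl(\lambda_i(t+1)+\sum_{r\in\mathcal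 C_i\setminus\{j\}}\hat\alpha_r(t)\bigr)+\hat\beta_i^P(t)$ and $\beta_j^Q(t+1)=X_{ii}\bigl(\lambda_i(t+1)+\sum_{r\in\mathcal C_i\setminus\{j\}}\hat\alpha_r(t)\bigr)+\hat\beta_i^Q(t)$. For each $j$ with an algorithmic parent: $\hat\alpha_j(t+1)=\alpha_j(t+1-\tau^{\uparrow}_j(t))$, $\hat\beta_j^P(t+1)=\beta_j^P(t+1-\tau^{\downarrow}_j(t))$, $\hat\beta_j^Q(t+1)=\beta_j^Q(t+1-\tau^{\downarrow}_j(t))$. (4) $z_i^P(t+1)=R_{ii}\bigl(\lambda_i(t+1)+\sum_{j\in\mathcal C_i}\hat\alpha_j(t+1)\bigr)+\hat\beta_i^P(t+1)$ and $z_i^Q(t+1)=X_{ii}\bigl(\lambda_i(t+1)+\sum_{j\in\mathcal C_i}\hat\alpha_j(t+1)\bigr)+\hat\beta_i^Q(t+1)$. *)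

(* Defs.v *)
From Stdlib Require Import Reals Lra Lia ZArith List Bool.
Import ListNotations.
Open Scope R_scope.

(* Vectors in R^N are functions nat -> R whose entries 1..N are meaningful
   (node labels of N = {1,...,N}). *)

Fixpoint sum_to (n : nat) (f : nat -> R) : R :=
  match n with
  | O => 0
  | S k => sum_to k f + f (S k)
  end.

Fixpoint sum_lt (n : nat) (f : nat -> R) : R :=
  match n with
  | O => 0
  | S k => sum_lt k f + f k
  end.

Definition in_nodes (N i : nat) : Prop := (1 <= i <= N)%nat.

Definition vnorm (N : nat) (x : nat -> R) : R := sqrt (sum_to N (fun i => x i ^ 2)).

Definition vnorm2 (N : nat) (x y : nat -> R) : R :=
  sqrt (sum_to N (fun i => x i ^ 2 + y i ^ 2)).

Definition matvec (N : nat) (A : nat -> nat -> R) (x : nat -> R) : nat -> R :=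
  fun i => sum_to N (fun j => A i j * x j).

Definition is_spectral_norm (N : nat) (A : nat -> nat -> R) (M : R) : Prop :=
  is_lub (fun y => exists x : nat -> R, vnorm N x <= 1 /\ y = vnorm N (matvec N A x)) M.

(* sigma : parent map; nodes are 0..N, root 0. *)
Definition is_radial_tree (N : nat) (sigma : nat -> nat) : Prop :=
  forall i, in_nodes N i ->
    (sigma i <= N)%nat /\ exists m, Nat.iter m sigma i = 0%nat.

(* edge (sigma k, k), identified by its child k in N, lies on the path P_i
   from 0 to i  iff  k is i or an ancestor of i (before reaching the root). *)
Definition on_path (N : nat) (sigma : nat -> nat) (k i : nat) : bool :=
  existsb (fun m => Nat.eqb (Nat.iter m sigma i) k &&
                    forallb (fun m' => negb (Nat.eqb (Nat.iter m' sigma i) 0))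
                            (seq 0 (S m)))
          (seq 0 (S N)).

(* R_ij = 2 * sum_{(h,k) in P_i cap P_j} r_hk ; r k = resistance of edge (sigma k, k) *)
Definition Rmat (N : nat) (sigma : nat -> nat) (r : nat -> R) : nat -> nat -> R :=
  fun i j => 2 * sum_to N (fun k => if on_path N sigma k i && on_path N sigma k j
                                    then r k else 0).

Definition adj (N : nat) (sigma : nat -> nat) (u v : nat) : Prop :=
  (in_nodes N u /\ sigma u = v) \/ (in_nodes N v /\ sigma v = u).

Definition is_walk (N : nat) (sigma : nat -> nat) (u v n : nat) : Prop :=
  exists w : nat -> nat, w 0%nat = u /\ w n = v /\
    forall k, (k < n)%nat -> adj N sigma (w k) (w (S k)).

Definition is_dist (N : nat) (sigma : nat -> nat) (i j n : nat) : Prop :=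
  is_walk N sigma i j n /\ forall m, is_walk N sigma i j m -> (n <= m)%nat.

Definition is_diameter (N : nat) (sigma : nat -> nat) (d : nat) : Prop :=
  (forall i j n, in_nodes N i -> in_nodes N j -> is_dist N sigma i j n -> (n <= d)%nat) /\
  (exists i j, in_nodes N i /\ in_nodes N j /\ is_dist N sigma i j d).

Definition is_amin (N : nat) (aP aQ : nat -> R) (am : R) : Prop :=
  (forall i, in_nodes N i -> am <= aP i /\ am <= aQ i) /\
  (exists i, in_nodes N i /\ (am = aP i \/ am = aQ i)).

Definition volt (N : nat) (Rm Xm : nat -> nat -> R) (v0 : R) (p q : nat -> R) : nat -> R :=
  fun i => matvec N Rm p i + matvec N Xm q i + v0.

Definition quad_cost (N : nat) (a b c : nat -> R) (p : nat -> R) : R :=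
  sum_to N (fun i => a i / 2 * p i ^ 2 + b i * p i + c i).

Definition in_box (N : nat) (lo hi x : nat -> R) : Prop :=
  forall i, in_nodes N i -> lo i <= x i <= hi i.

Definition lagrangian (N : nat) (Rm Xm : nat -> nat -> R) (v0 : R)
  (vlo vhi aP bP cP aQ bQ cQ : nat -> R) (llo lhi p q : nat -> R) : R :=
  quad_cost N aP bP cP p + quad_cost N aQ bQ cQ q
  + sum_to N (fun i => llo i * (vlo i - volt N Rm Xm v0 p q i))
  + sum_to N (fun i => lhi i * (volt N Rm Xm v0 p q i - vhi i)).

Definition is_dual_function (N : nat) (Rm Xm : nat -> nat -> R) (v0 : R)
  (vlo vhi plo phi qlo qhi aP bP cP aQ bQ cQ : nat -> R)
  (D : (nat -> R) -> (nat -> R) -> R) : Prop :=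
  forall llo lhi : nat -> R,
    (exists p q, in_box N plo phi p /\ in_box N qlo qhi q /\
        D llo lhi = lagrangian N Rm Xm v0 vlo vhi aP bP cP aQ bQ cQ llo lhi p q) /\
    (forall p q, in_box N plo phi p -> in_box N qlo qhi q ->
        D llo lhi <= lagrangian N Rm Xm v0 vlo vhi aP bP cP aQ bQ cQ llo lhi p q).

Definition is_gradient (N : nat) (F : (nat -> R) -> (nat -> R) -> R)
  (llo lhi Glo Ghi : nat -> R) : Prop :=
  forall eps, 0 < eps -> exists delta, 0 < delta /\
    forall mlo mhi : nat -> R,
      vnorm2 N (fun i => mlo i - llo i) (fun i => mhi i - lhi i) < delta ->
      Rabs (F mlo mhi - F llo lhi
            - sum_to N (fun i => Glo i * (mlo i - llo i) + Ghi i * (mhi i - lhi i)))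
      <= eps * vnorm2 N (fun i => mlo i - llo i) (fun i => mhi i - lhi i).

Definition clamp (x a b : R) : R := Rmin (Rmax x a) b.
Definition pos_part (x : R) : R := Rmax x 0.

(* message f_j(t+1-tau), with messages at negative times equal to 0 *)
Definition delayed (f : nat -> nat -> R) (t tau j : nat) : R :=
  if Nat.ltb (S t) tau then 0 else f (S t - tau)%nat j.

Definition sum_children (N : nat) (sigma : nat -> nat) (i : nat) (f : nat -> R) : R :=
  sum_to N (fun r => if Nat.eqb (sigma r) i then f r else 0).
Definition sum_children_but (N : nat) (sigma : nat -> nat) (i j : nat) (f : nat -> R) : R :=
  sum_to N (fun r => if Nat.eqb (sigma r) i && negb (Nat.eqb r j) then f r else 0).

(* All state sequences are indexed (time t) (node i). *)
Definition dist_opt_run (N : nat) (sigma : nat -> nat) (Rm Xm : nat -> nat -> R) (v0 : R)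
  (vlo vhi plo phi qlo qhi aP bP aQ bQ : nat -> R) (gamma : R)
  (tau_up tau_dn : nat -> nat -> nat)
  (p q zP zQ llo lhi lam alpha betaP betaQ alphah betaPh betaQh : nat -> nat -> R) : Prop :=
  (forall i, in_nodes N i ->
     zP 0%nat i = 0 /\ zQ 0%nat i = 0 /\ llo 0%nat i = 0 /\ lhi 0%nat i = 0 /\
     lam 0%nat i = 0 /\ alpha 0%nat i = 0 /\ betaP 0%nat i = 0 /\ betaQ 0%nat i = 0 /\
     alphah 0%nat i = 0 /\ betaPh 0%nat i = 0 /\ betaQh 0%nat i = 0) /\
  (forall i t, in_nodes N i -> sigma i = 0%nat -> betaPh t i = 0 /\ betaQh t i = 0) /\
  (forall t i, in_nodes N i ->
     p t i = clamp ((zP t i - bP i) / aP i) (plo i) (phi i) /\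
     q t i = clamp ((zQ t i - bQ i) / aQ i) (qlo i) (qhi i) /\
     llo (S t) i = pos_part (llo t i + gamma * (vlo i - volt N Rm Xm v0 (p t) (q t) i)) /\
     lhi (S t) i = pos_part (lhi t i + gamma * (volt N Rm Xm v0 (p t) (q t) i - vhi i)) /\
     lam (S t) i = llo (S t) i - lhi (S t) i /\
     alpha (S t) i = lam (S t) i + sum_children N sigma i (alphah t) /\
     (forall j, in_nodes N j -> sigma j = i ->
        betaP (S t) j = Rm i i * (lam (S t) i + sum_children_but N sigma i j (alphah t))
                        + betaPh t i /\
        betaQ (S t) j = Xm i i * (lam (S t) i + sum_children_but N sigma i j (alphah t))
                        + betaQh t i) /\
     (sigma i <> 0%nat ->
        alphah (S t) i = delayed alpha t (tau_up i t) i /\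
        betaPh (S t) i = delayed betaP t (tau_dn i t) i /\
        betaQh (S t) i = delayed betaQ t (tau_dn i t) i) /\
     zP (S t) i = Rm i i * (lam (S t) i + sum_children N sigma i (alphah (S t)))
                  + betaPh (S t) i /\
     zQ (S t) i = Xm i i * (lam (S t) i + sum_children N sigma i (alphah (S t)))
                  + betaQh (S t) i).

Definition at_time (f : nat -> nat -> R) (s : Z) : nat -> R :=
  fun i => if (s <? 0)%Z then 0 else f (Z.to_nat s) i.

(* Main.v *)
Require Import Defs.
From Stdlib Require Import Reals ZArith.
From Stdlib Require Import Lra Lia List Bool Classical ClassicalEpsilon Wf_nat.
Open Scope R_scope.

Lemma sum_to_ext n f g : (forall i, (1 <= i <= n)%nat -> f i = g i) -> sum_to n f = sum_to n g.
Proof. induction n; simpl; intros H; auto. rewrite IHn by (intros; apply H; lia). rewrite H by lia. auto. Qed.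

Lemma sum_to_le n f g : (forall i, (1 <= i <= n)%nat -> f i <= g i) -> sum_to n f <= sum_to n g.
Proof. induction n; simpl; intros H; [lra|]. assert (H1 := H (S n) ltac:(lia)). assert (sum_to n f <= sum_to n g) by (apply IHn; intros; apply H; lia). lra. Qed.

Lemma sum_to_plus n f g : sum_to n (fun i => f i + g i) = sum_to n f + sum_to n g.
Proof. induction n; simpl; [lra|]. rewrite IHn; lra. Qed.

Lemma sum_to_minus n f g : sum_to n (fun i => f i - g i) = sum_to n f - sum_to n g.
Proof. induction n; simpl; [lra|]. rewrite IHn; lra. Qed.

Lemma sum_to_scal n c f : sum_to n (fun i => c * f i) = c * sum_to n f.
Proof. induction n; simpl; [lra|]. rewrite IHn; lra. Qed.

Lemma sum_to_zero n f : (forall i, (1 <= i <= n)%nat -> f i = 0) -> sum_to n f = 0.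
Proof. intros H. transitivity (sum_to n (fun _ => 0)). apply sum_to_ext; auto. induction n; simpl; auto. rewrite IHn by (intros; apply H; lia). lra. Qed.

Lemma sum_to_nonneg n f : (forall i, (1 <= i <= n)%nat -> 0 <= f i) -> 0 <= sum_to n f.
Proof. intros H. replace 0 with (sum_to n (fun _ => 0)). apply sum_to_le; auto.
  apply sum_to_zero; auto. Qed.

Lemma sum_to_abs n f : Rabs (sum_to n f) <= sum_to n (fun i => Rabs (f i)).
Proof. induction n; simpl. rewrite Rabs_R0; lra.
  eapply Rle_trans. apply Rabs_triang. lra. Qed.

Lemma sum_to_delta n i g : (1 <= i <= n)%nat ->
  sum_to n (fun k => if Nat.eqb k i then g k else 0) = g i.
Proof. induction n; cbn [sum_to]; intros H; [lia|].
  destruct (Nat.eq_dec i (S n)).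
  - subst. rewrite Nat.eqb_refl. rewrite sum_to_zero. lra.
    intros k Hk. destruct (Nat.eqb_spec k (S n)); [lia|auto].
  - destruct (Nat.eqb_spec (S n) i); [lia|]. rewrite IHn by lia. lra. Qed.

Lemma sum_to_update n i (F : nat -> R -> R) (p : nat -> R) y : (1 <= i <= n)%nat ->
  sum_to n (fun k => F k (if Nat.eqb k i then y else p k)) =
  sum_to n (fun k => F k (p k)) + (F i y - F i (p i)).
Proof. intros H.
  assert (E: sum_to n (fun k => F k (if Nat.eqb k i then y else p k)) - sum_to n (fun k => F k (p k))
   = sum_to n (fun k => if Nat.eqb k i then F k y - F k (p k) else 0)).
  { rewrite <- sum_to_minus. apply sum_to_ext. intros k _. destruct (Nat.eqb_spec k i); subst; lra. }
  rewrite sum_to_delta in E by auto. lra. Qed.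

Lemma sum_lt_ext n f g : (forall i, (i < n)%nat -> f i = g i) -> sum_lt n f = sum_lt n g.
Proof. induction n; simpl; intros H; auto. rewrite IHn by (intros; apply H; lia). rewrite H by lia. auto. Qed.

Lemma sum_lt_le n f g : (forall i, (i < n)%nat -> f i <= g i) -> sum_lt n f <= sum_lt n g.
Proof. induction n; simpl; intros H; [lra|]. assert (H1 := H n ltac:(lia)). assert (sum_lt n f <= sum_lt n g) by (apply IHn; intros; apply H; lia). lra. Qed.

Lemma sum_lt_plus n f g : sum_lt n (fun i => f i + g i) = sum_lt n f + sum_lt n g.
Proof. induction n; simpl; [lra|]. rewrite IHn; lra. Qed.

Lemma sum_lt_scal n c f : sum_lt n (fun i => c * f i) = c * sum_lt n f.
Proof. induction n; simpl; [lra|]. rewrite IHn; lra. Qed.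

Lemma sum_lt_nonneg n f : (forall i, (i < n)%nat -> 0 <= f i) -> 0 <= sum_lt n f.
Proof. induction n; simpl; intros H; [lra|]. assert (H1 := H n ltac:(lia)). assert (0 <= sum_lt n f) by (apply IHn; intros; apply H; lia). lra. Qed.

Lemma sum_lt_mono n m f : (n <= m)%nat -> (forall i, 0 <= f i) -> sum_lt n f <= sum_lt m f.
Proof. intros H Hf. induction H; [lra|]. simpl. specialize (Hf m). lra. Qed.

Lemma sum_lt_split a b f : sum_lt (a + b) f = sum_lt a f + sum_lt b (fun m => f (a + m)%nat).
Proof. induction b; simpl. rewrite Nat.add_0_r; lra. rewrite Nat.add_succ_r; simpl. rewrite IHb; lra. Qed.

Lemma sum_exchange n m (F : nat -> nat -> R) :
  sum_to n (fun k => sum_lt m (fun j => F k j)) = sum_lt m (fun j => sum_to n (fun k => F k j)).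
Proof. induction n; simpl. induction m; simpl; auto. rewrite <- IHm; lra.
  rewrite IHn. rewrite <- sum_lt_plus. auto. Qed.

Lemma sq_le x y : 0 <= y -> x^2 <= y^2 -> x <= y.
Proof. intros Hy H. destruct (Rle_dec x y); auto. exfalso. assert (y < x) by lra. nra. Qed.

Lemma CS_sq n a b : (sum_to n (fun i => a i * b i))^2 <= sum_to n (fun i => a i ^2) * sum_to n (fun i => b i ^ 2).
Proof. induction n; cbn [sum_to]; [lra|].
  set (C := sum_to n (fun i => a i * b i)) in *.
  set (A := sum_to n (fun i => a i ^ 2)) in *.
  set (B := sum_to n (fun i => b i ^ 2)) in *.
  assert (HA: 0 <= A) by (apply sum_to_nonneg; intros; nra).
  assert (HB: 0 <= B) by (apply sum_to_nonneg; intros; nra).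
  set (u := a (S n)) ; set (v := b (S n)).
  assert (H2: 2 * u * v * C <= u^2 * B + v^2 * A).
  { assert (0 <= u^2*B + v^2*A) by nra.
    assert ((2*u*v*C)^2 <= (u^2*B+v^2*A)^2).
    { assert ((2*u*v*C)^2 = 4*(u*v)^2 * C^2) by ring.
      assert (4*(u*v)^2*C^2 <= 4*(u*v)^2*(A*B)) by (apply Rmult_le_compat_l; nra).
      assert ((u^2*B+v^2*A)^2 = 4*(u*v)^2*(A*B) + (u^2*B - v^2*A)^2) by ring.
      assert (0 <= (u^2*B - v^2*A)^2) by apply pow2_ge_0.
      lra. }
    apply sq_le; auto. }
  assert (E1: (C + u*v)^2 = C^2 + 2*u*v*C + u^2*v^2) by ring.
  assert (E2: (A + u^2)*(B+v^2) = A*B + (u^2*B + v^2*A) + u^2*v^2) by ring.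
  rewrite E1, E2. lra. Qed.

Lemma CS_abs n a b : sum_to n (fun i => Rabs (a i) * Rabs (b i)) <=
  sqrt (sum_to n (fun i => a i ^ 2)) * sqrt (sum_to n (fun i => b i ^ 2)).
Proof.
  assert (H := CS_sq n (fun i => Rabs (a i)) (fun i => Rabs (b i))). cbv beta in H.
  rewrite (sum_to_ext n (fun i => Rabs (a i) ^ 2) (fun i => a i ^ 2)) in H by (intros; rewrite <- Rsqr_pow2, <- Rsqr_abs, Rsqr_pow2; auto).
  rewrite (sum_to_ext n (fun i => Rabs (b i) ^ 2) (fun i => b i ^ 2)) in H by (intros; rewrite <- Rsqr_pow2, <- Rsqr_abs, Rsqr_pow2; auto).
  set (S := sum_to n (fun i => Rabs (a i) * Rabs (b i))) in *.
  assert (HA: 0 <= sum_to n (fun i => a i ^ 2)) by (apply sum_to_nonneg; intros; nra).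
  assert (HB: 0 <= sum_to n (fun i => b i ^ 2)) by (apply sum_to_nonneg; intros; nra).
  assert (HS: 0 <= S) by (apply sum_to_nonneg; intros; apply Rmult_le_pos; apply Rabs_pos).
  assert (E: sqrt (sum_to n (fun i => a i ^ 2)) * sqrt (sum_to n (fun i => b i ^ 2)) = sqrt (sum_to n (fun i => a i ^ 2) * sum_to n (fun i => b i ^ 2))) by (rewrite sqrt_mult_alt; auto).
  rewrite E. rewrite <- (sqrt_pow2 S HS). apply sqrt_le_1_alt. lra. Qed.

Lemma vnorm_nonneg N v : 0 <= vnorm N v.
Proof. apply sqrt_pos. Qed.

Lemma sumsq_nonneg n f : 0 <= sum_to n (fun i => f i ^ 2).
Proof. apply sum_to_nonneg; intros; nra. Qed.

Lemma minkowski N u w : vnorm N (fun i => u i + w i) <= vnorm N u + vnorm N w.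
Proof. unfold vnorm.
  assert (HU := sumsq_nonneg N u). assert (HW := sumsq_nonneg N w).
  assert (CS := CS_abs N u w).
  assert (E: sum_to N (fun i => (u i + w i)^2) = sum_to N (fun i => u i ^2) + sum_to N (fun i => w i ^ 2) + 2 * sum_to N (fun i => u i * w i)).
  { rewrite <- sum_to_scal, <- !sum_to_plus. apply sum_to_ext; intros; ring. }
  assert (L: sum_to N (fun i => u i * w i) <= sum_to N (fun i => Rabs (u i) * Rabs (w i))).
  { apply sum_to_le; intros. rewrite <- Rabs_mult. apply Rle_abs. }
  assert (P := sqrt_sqrt _ HU). assert (Q := sqrt_sqrt _ HW).
  assert (0 <= sqrt (sum_to N (fun i => u i ^ 2)) + sqrt (sum_to N (fun i => w i ^ 2))) by (generalize (sqrt_pos (sum_to N (fun i => u i ^ 2))) (sqrt_pos (sum_to N (fun i => w i ^ 2))); lra).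
  rewrite <- (sqrt_pow2 _ H). apply sqrt_le_1_alt. rewrite E. nra. Qed.

Lemma least_ex (P : nat -> Prop) n : P n -> exists m, P m /\ forall k, (k < m)%nat -> ~ P k.
Proof. revert n. intro n. induction n as [n IH] using (well_founded_induction lt_wf). intros Pn.
  destruct (classic (exists k, (k < n)%nat /\ P k)) as [[k [Hk Pk]]|H].
  - apply (IH k Hk Pk).
  - exists n. split; auto. intros k Hk Pk. apply H. eauto. Qed.

Definition anc (sigma : nat -> nat) (m k j : nat) : Prop :=
  Nat.iter m sigma k = j /\ forall m', (m' <= m)%nat -> Nat.iter m' sigma k <> 0%nat.

Lemma iter_in_nodes N sigma k m : is_radial_tree N sigma -> in_nodes N k ->
  (forall m', (m' <= m)%nat -> Nat.iter m' sigma k <> 0%nat) -> in_nodes N (Nat.iter m sigma k).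
Proof. intros T Hk. induction m; intros H; simpl; auto.
  assert (Hm := IHm ltac:(intros; apply H; lia)).
  destruct (T _ Hm) as [Hs _]. assert (H2 := H (S m) ltac:(lia)). simpl in H2.
  unfold in_nodes in *. lia. Qed.

Lemma iter_shift (sigma : nat -> nat) (a b k y : nat) : Nat.iter a sigma k = Nat.iter b sigma k ->
  Nat.iter (b + y) sigma k = Nat.iter (a + y) sigma k.
Proof. intros H. rewrite (Nat.add_comm b), (Nat.add_comm a), !Nat.iter_add, H. auto. Qed.

Lemma no_repeat N sigma k a b : is_radial_tree N sigma -> in_nodes N k -> (a < b)%nat ->
  Nat.iter a sigma k = Nat.iter b sigma k ->
  (forall m', (m' < b)%nat -> Nat.iter m' sigma k <> 0%nat) -> False.
Proof. intros T Hk Hab E Hnz.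
  assert (C: forall m, exists j, (j < b)%nat /\ Nat.iter m sigma k = Nat.iter j sigma k).
  { intro m. induction m as [m IH] using (well_founded_induction lt_wf).
    destruct (Nat.lt_ge_cases m b). exists m; auto.
    replace m with (b + (m - b))%nat by lia. rewrite (iter_shift sigma a b k (m - b)) by auto.
    apply IH. lia. }
  destruct (T k Hk) as [_ [M HM]]. destruct (C M) as [j [Hj E2]]. apply (Hnz j Hj). congruence. Qed.

Lemma iter_inj N sigma k a b : is_radial_tree N sigma -> in_nodes N k ->
  Nat.iter a sigma k = Nat.iter b sigma k ->
  (forall m', (m' < a)%nat -> Nat.iter m' sigma k <> 0%nat) ->
  (forall m', (m' < b)%nat -> Nat.iter m' sigma k <> 0%nat) -> a = b.
Proof. intros T Hk E Ha Hb. destruct (Nat.lt_total a b) as [H|[H|H]]; auto.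
  - exfalso. eapply no_repeat; eauto.
  - exfalso. eapply (no_repeat N sigma k b a); eauto. Qed.

Lemma anc_bound N sigma k m : is_radial_tree N sigma -> in_nodes N k ->
  (forall m', (m' <= m)%nat -> Nat.iter m' sigma k <> 0%nat) -> (m < N)%nat.
Proof. intros T Hk H.
  set (l := map (fun j => Nat.iter j sigma k) (seq 0 (S m))).
  assert (ND: NoDup l).
  { apply NoDup_map_NoDup_ForallPairs; [|apply seq_NoDup].
    intros a b Ha Hb E. apply in_seq in Ha, Hb.
    eapply iter_inj; eauto; intros; apply H; lia. }
  assert (I: incl l (seq 1 N)).
  { intros y Hy. unfold l in Hy. apply in_map_iff in Hy. destruct Hy as [j [Ej Hj]].
    apply in_seq in Hj. subst y. assert (in_nodes N (Nat.iter j sigma k)).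
    { apply iter_in_nodes; auto. intros; apply H; lia. }
    apply in_seq. unfold in_nodes in *; lia. }
  assert (L := NoDup_incl_length ND I). unfold l in L. rewrite length_map, !length_seq in L. lia. Qed.

Lemma on_path_iff N sigma j k : on_path N sigma j k = true <->
  exists m, (m <= N)%nat /\ anc sigma m k j.
Proof. unfold on_path, anc. rewrite existsb_exists. split.
  - intros [m [Hm E]]. apply andb_true_iff in E. destruct E as [E1 E2].
    apply Nat.eqb_eq in E1. rewrite forallb_forall in E2. apply in_seq in Hm.
    exists m. split; [lia|]. split; auto. intros m' Hm' E3.
    assert (E4 := E2 m' ltac:(apply in_seq; lia)). rewrite E3 in E4. simpl in E4. discriminate.
  - intros [m [Hm [E1 E2]]]. exists m. split. apply in_seq; lia.
    apply andb_true_iff. split. apply Nat.eqb_eq; auto. apply forallb_forall.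
    intros m' Hm'. apply in_seq in Hm'. apply negb_true_iff. apply Nat.eqb_neq. apply E2. lia. Qed.

Lemma on_path_iff' N sigma j k : is_radial_tree N sigma -> in_nodes N k ->
  (on_path N sigma j k = true <-> exists m, anc sigma m k j).
Proof. intros T Hk. rewrite on_path_iff. split.
  - intros [m [_ H]]; eauto.
  - intros [m H]. exists m. split; auto. destruct H as [_ H]. assert (m < N)%nat by (eapply anc_bound; eauto). lia. Qed.

Lemma on_path_0 N sigma j : on_path N sigma j 0 = false.
Proof. destruct (on_path N sigma j 0) eqn:E; auto. apply on_path_iff in E.
  destruct E as [m [_ [_ H]]]. exfalso. apply (H 0%nat); auto; lia. Qed.

Lemma on_path_refl N sigma k : is_radial_tree N sigma -> in_nodes N k -> on_path N sigma k k = true.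
Proof. intros T Hk. apply on_path_iff'; auto. exists 0%nat. split; auto. intros m' Hm'.
  replace m' with 0%nat by lia. simpl. unfold in_nodes in Hk; lia. Qed.

Lemma on_path_nz N sigma j k : on_path N sigma j k = true -> j <> 0%nat.
Proof. intros H. apply on_path_iff in H. destruct H as [m [_ [E H]]]. subst j. apply H; lia. Qed.

Lemma on_path_in N sigma j k : is_radial_tree N sigma -> in_nodes N k -> on_path N sigma j k = true -> in_nodes N j.
Proof. intros T Hk H. apply on_path_iff' in H; auto. destruct H as [m [E H]]. subst j.
  apply iter_in_nodes; auto. Qed.

Lemma on_path_step N sigma m i : is_radial_tree N sigma -> in_nodes N i ->
  (on_path N sigma m i = true <-> m = i \/ on_path N sigma m (sigma i) = true).
Proof. intros T Hi. rewrite on_path_iff' by auto. split.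
  - intros [a [E H]]. destruct a as [|a].
    + left. simpl in E. auto.
    + right. apply on_path_iff. exists a. split.
      * assert (S a < N)%nat by (eapply anc_bound; eauto). lia.
      * split. rewrite <- E, Nat.iter_succ_r. auto.
        intros m' Hm'. rewrite <- Nat.iter_succ_r. apply H; lia.
  - intros [E|H].
    + subst. exists 0%nat. split; auto. intros m' Hm'. replace m' with 0%nat by lia. simpl. unfold in_nodes in Hi; lia.
    + apply on_path_iff in H. destruct H as [a [_ [E H]]]. exists (S a). split.
      rewrite Nat.iter_succ_r; auto. intros m' Hm'. destruct m' as [|m'].
      simpl; unfold in_nodes in Hi; lia. rewrite Nat.iter_succ_r. apply H; lia. Qed.

Lemma on_path_up N sigma c i k : is_radial_tree N sigma -> in_nodes N k -> in_nodes N c ->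
  sigma c = i -> in_nodes N i -> on_path N sigma c k = true -> on_path N sigma i k = true.
Proof. intros T Hk Hc Ei Hi H. apply on_path_iff' in H; auto. apply on_path_iff'; auto.
  destruct H as [a [E H]]. exists (S a). split. simpl. congruence.
  intros m' Hm'. destruct (Nat.eq_dec m' (S a)). subst m'. simpl. rewrite E, Ei. unfold in_nodes in Hi; lia.
  apply H; lia. Qed.

Lemma on_path_trans N sigma m i k : is_radial_tree N sigma -> in_nodes N k ->
  on_path N sigma m i = true -> on_path N sigma i k = true -> on_path N sigma m k = true.
Proof. intros T Hk H1 H2. assert (Hi := on_path_in N sigma i k T Hk H2).
  apply on_path_iff' in H1; auto. apply on_path_iff' in H2; auto. apply on_path_iff'; auto.
  destruct H1 as [a [E1 H1]]. destruct H2 as [b [E2 H2]]. exists (a + b)%nat. split.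
  rewrite Nat.iter_add, E2; auto.
  intros m' Hm'. destruct (Nat.le_gt_cases m' b). apply H2; auto.
  replace m' with ((m' - b) + b)%nat by lia. rewrite Nat.iter_add, E2. apply H1. lia. Qed.

Lemma child_not_self N sigma c k : is_radial_tree N sigma -> in_nodes N k ->
  on_path N sigma c k = true -> sigma c = k -> False.
Proof. intros T Hk H E. apply on_path_iff' in H; auto. destruct H as [a [Ea H]].
  assert (S a = 0)%nat.
  { eapply (iter_inj N sigma k); eauto. simpl. rewrite Ea, E. auto.
    intros; apply H; lia. intros; lia. }
  lia. Qed.

Lemma child_unique N sigma c c' k : is_radial_tree N sigma -> in_nodes N k ->
  on_path N sigma c k = true -> on_path N sigma c' k = true -> sigma c = sigma c' -> sigma c <> 0%nat -> c = c'.
Proof. intros T Hk H H' E Hnz. apply on_path_iff' in H, H'; auto.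
  destruct H as [a [Ea H]]. destruct H' as [b [Eb H']].
  assert (S a = S b).
  { eapply (iter_inj N sigma k); eauto. simpl. rewrite Ea, Eb. auto.
    intros m' Hm'. destruct (Nat.eq_dec m' a). subst; apply H; lia. apply H; lia.
    intros m' Hm'. destruct (Nat.eq_dec m' b). subst; apply H'; lia. apply H'; lia. }
  assert (a = b) by lia. subst. congruence. Qed.

Definition IND (b : bool) : R := if b then 1 else 0.

Lemma T1 N sigma i k : is_radial_tree N sigma -> in_nodes N i -> in_nodes N k ->
  IND (on_path N sigma i k) = IND (Nat.eqb k i) +
    sum_to N (fun c => if Nat.eqb (sigma c) i then IND (on_path N sigma c k) else 0).
Proof. intros T Hi Hk.
  destruct (Nat.eqb_spec k i).
  - subst. rewrite on_path_refl by auto. rewrite sum_to_zero. unfold IND; lra.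
    intros c Hc. destruct (Nat.eqb_spec (sigma c) i); auto.
    destruct (on_path N sigma c i) eqn:E; simpl; auto. exfalso. apply (child_not_self N sigma c i T Hk E e).
  - destruct (on_path N sigma i k) eqn:E.
    + apply on_path_iff' in E as E'; auto. destruct E' as [a [Ea Ha]].
      destruct a as [|a]. simpl in Ea. congruence.
      set (c0 := Nat.iter a sigma k).
      assert (Hc0: on_path N sigma c0 k = true). { apply on_path_iff'; auto. exists a; split; [reflexivity| intros; apply Ha; lia]. }
      assert (Sc0: sigma c0 = i) by (rewrite <- Ea; simpl; auto).
      assert (Nc0: in_nodes N c0) by (eapply on_path_in; eauto).
      rewrite (sum_to_ext N _ (fun c => if Nat.eqb c c0 then 1 else 0)).
      rewrite (sum_to_delta N c0 (fun _ => 1)) by (unfold in_nodes in Nc0; lia). unfold IND; lra.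
      intros c Hc. destruct (Nat.eqb_spec c c0).
      * subst. rewrite Sc0, Nat.eqb_refl, Hc0. auto.
      * destruct (Nat.eqb_spec (sigma c) i); auto.
        destruct (on_path N sigma c k) eqn:E2; simpl; auto. exfalso. apply n0.
        apply (child_unique N sigma c c0 k T Hk E2 Hc0); [congruence | rewrite e; unfold in_nodes in Hi; lia].
    + rewrite sum_to_zero. unfold IND; lra.
      intros c Hc. destruct (Nat.eqb_spec (sigma c) i); auto.
      destruct (on_path N sigma c k) eqn:E2; simpl; auto. exfalso.
      assert (on_path N sigma i k = true) by (eapply on_path_up; eauto). congruence. Qed.

Lemma Rmat_sym N sigma r i k : Rmat N sigma r i k = Rmat N sigma r k i.
Proof. unfold Rmat. f_equal. apply sum_to_ext. intros. rewrite andb_comm. auto. Qed.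

Lemma Rmat_0 N sigma r k : Rmat N sigma r 0 k = 0.
Proof. unfold Rmat. rewrite sum_to_zero. lra. intros. rewrite on_path_0. auto. Qed.

Lemma Rmat_in N sigma r i k : is_radial_tree N sigma -> in_nodes N i -> in_nodes N k ->
  on_path N sigma i k = true -> Rmat N sigma r i k = Rmat N sigma r i i.
Proof. intros T Hi Hk H. unfold Rmat. f_equal. apply sum_to_ext. intros m _.
  destruct (on_path N sigma m i) eqn:E; simpl; auto.
  rewrite (on_path_trans N sigma m i k) by auto. auto. Qed.

Lemma Rmat_out N sigma r i k : is_radial_tree N sigma -> in_nodes N i -> in_nodes N k ->
  on_path N sigma i k = false -> Rmat N sigma r i k = Rmat N sigma r (sigma i) k.
Proof. intros T Hi Hk H. unfold Rmat. f_equal. apply sum_to_ext. intros m _.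
  destruct (on_path N sigma m i) eqn:E; destruct (on_path N sigma m (sigma i)) eqn:E2; simpl; auto.
  - apply on_path_step in E; auto. destruct E as [E|E]; [subst; rewrite H; auto| congruence].
  - assert (on_path N sigma m i = true) by (apply on_path_step; auto). congruence. Qed.

Definition meet (sigma : nat -> nat) (k u n : nat) : Prop :=
  exists m1 m2, (m1 + m2 = n)%nat /\ Nat.iter m1 sigma u = Nat.iter m2 sigma k /\
    (forall m', (m' < m1)%nat -> Nat.iter m' sigma u <> 0%nat) /\
    (forall m', (m' < m2)%nat -> Nat.iter m' sigma k <> 0%nat).

Definition LeastP (P : nat -> Prop) (n : nat) : Prop := P n /\ forall m, P m -> (n <= m)%nat.

Definition tphi (sigma : nat -> nat) (k u : nat) : nat :=
  epsilon (inhabits 0%nat) (LeastP (meet sigma k u)).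

Lemma least_exists (P : nat -> Prop) : (exists n, P n) -> exists n, LeastP P n.
Proof. intros [n Pn]. destruct (least_ex P n Pn) as [m [Pm Hm]]. exists m. split; auto.
  intros m' Pm'. destruct (Nat.le_gt_cases m m'); auto. exfalso; eapply Hm; eauto. Qed.

Lemma phi_spec sigma k u : (exists n, meet sigma k u n) ->
  meet sigma k u (tphi sigma k u) /\ forall m, meet sigma k u m -> (tphi sigma k u <= m)%nat.
Proof. intros H. unfold tphi. apply (epsilon_spec (inhabits 0%nat) (LeastP (meet sigma k u))). apply least_exists; auto. Qed.

Lemma depth_ex N sigma u : is_radial_tree N sigma -> (u <= N)%nat ->
  exists M, Nat.iter M sigma u = 0%nat /\ forall m', (m' < M)%nat -> Nat.iter m' sigma u <> 0%nat.
Proof. intros T Hu. destruct (Nat.eq_dec u 0).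
  - subst. exists 0%nat. split; auto. intros; lia.
  - destruct (T u ltac:(unfold in_nodes; lia)) as [_ [M HM]].
    destruct (least_ex (fun m => Nat.iter m sigma u = 0%nat) M HM) as [m [Hm Hm']].
    exists m. split; auto. Qed.

Lemma meet_ex N sigma k u : is_radial_tree N sigma -> (k <= N)%nat -> (u <= N)%nat -> exists n, meet sigma k u n.
Proof. intros T Hk Hu. destruct (depth_ex N sigma u T Hu) as [Mu [Eu Hu']].
  destruct (depth_ex N sigma k T Hk) as [Mk [Ek Hk']]. exists (Mu + Mk)%nat. exists Mu, Mk.
  repeat split; auto. congruence. Qed.

Lemma phi_le N sigma k u n : is_radial_tree N sigma -> (k <= N)%nat -> (u <= N)%nat -> meet sigma k u n -> (tphi sigma k u <= n)%nat.
Proof. intros T Hk Hu H. apply (phi_spec sigma k u (meet_ex N sigma k u T Hk Hu)); auto. Qed.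

Lemma phi_meet N sigma k u : is_radial_tree N sigma -> (k <= N)%nat -> (u <= N)%nat -> meet sigma k u (tphi sigma k u).
Proof. intros T Hk Hu. apply (phi_spec sigma k u (meet_ex N sigma k u T Hk Hu)). Qed.

Lemma phi_self N sigma k : is_radial_tree N sigma -> (k <= N)%nat -> tphi sigma k k = 0%nat.
Proof. intros T Hk. assert (tphi sigma k k <= 0)%nat; [|lia]. apply (phi_le N); auto.
  exists 0%nat, 0%nat. repeat split; intros; lia. Qed.

Lemma phi_lip N sigma k u : is_radial_tree N sigma -> (k <= N)%nat -> in_nodes N u ->
  (tphi sigma k u <= tphi sigma k (sigma u) + 1)%nat /\ (tphi sigma k (sigma u) <= tphi sigma k u + 1)%nat.
Proof. intros T Hk Hu. assert (Hw : (sigma u <= N)%nat) by (apply T; auto).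
  assert (Hu' : (u <= N)%nat) by (unfold in_nodes in Hu; lia).
  split.
  - destruct (phi_meet N sigma k (sigma u) T Hk Hw) as [m1 [m2 [E1 [E2 [H1 H2]]]]].
    apply (phi_le N); auto. exists (S m1), m2. repeat split; auto. lia. rewrite Nat.iter_succ_r. auto.
    intros m' Hm'. destruct m' as [|m']. simpl. unfold in_nodes in Hu; lia.
    rewrite Nat.iter_succ_r. apply H1; lia.
  - destruct (phi_meet N sigma k u T Hk Hu') as [m1 [m2 [E1 [E2 [H1 H2]]]]].
    destruct m1 as [|m1].
    + apply (phi_le N); auto.
      simpl in E2. exists 0%nat, (S m2). repeat split; auto. lia. simpl. rewrite E2. auto.
      intros; lia. intros m' Hm'. destruct (Nat.eq_dec m' m2). subst m'. rewrite <- E2. unfold in_nodes in Hu; lia.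
      apply H2; lia.
    + apply Nat.le_trans with (m1 + m2)%nat; [|lia]. apply (phi_le N); auto.
      exists m1, m2. repeat split; auto. rewrite <- Nat.iter_succ_r. auto.
      intros m' Hm'. rewrite <- Nat.iter_succ_r. apply H1; lia. Qed.

Lemma adj_le N sigma u v : is_radial_tree N sigma -> adj N sigma u v -> (u <= N)%nat /\ (v <= N)%nat.
Proof. intros T [[Hu E]|[Hv E]]; assert (H1 := proj1 (T _ ltac:(eassumption))); unfold in_nodes in *; subst; lia. Qed.

Lemma walk_phi N sigma i k n : is_radial_tree N sigma -> (k <= N)%nat -> (i <= N)%nat ->
  is_walk N sigma i k n -> (tphi sigma k i <= n)%nat.
Proof. intros T Hk Hi [w [W0 [Wn Hw]]].
  assert (C: forall j, (j <= n)%nat -> (w j <= N)%nat /\ (tphi sigma k i <= tphi sigma k (w j) + j)%nat).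
  { induction j; intros Hj. rewrite W0. lia.
    destruct (IHj ltac:(lia)) as [IH1 IH2]. assert (A := Hw j ltac:(lia)).
    destruct (adj_le N sigma _ _ T A) as [_ B]. split; auto.
    destruct A as [[Hu E]|[Hv E]].
    - destruct (phi_lip N sigma k (w j) T Hk Hu) as [L1 _]. rewrite E in L1. lia.
    - destruct (phi_lip N sigma k (w (S j)) T Hk Hv) as [_ L2]. rewrite E in L2. lia. }
  destruct (C n ltac:(lia)) as [_ C2]. rewrite Wn, (phi_self N) in C2 by auto. lia. Qed.

Lemma iter_nodes_lt N sigma k M m : is_radial_tree N sigma -> in_nodes N k ->
  (forall m', (m' < M)%nat -> Nat.iter m' sigma k <> 0%nat) -> (m < M)%nat -> in_nodes N (Nat.iter m sigma k).
Proof. intros T Hk H Hm. apply iter_in_nodes; auto. intros; apply H; lia. Qed.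

Lemma walk_ex N sigma i k : is_radial_tree N sigma -> in_nodes N i -> in_nodes N k ->
  exists n, is_walk N sigma i k n.
Proof. intros T Hi Hk.
  destruct (depth_ex N sigma i T ltac:(unfold in_nodes in Hi; lia)) as [Mi [Ei Hi']].
  destruct (depth_ex N sigma k T ltac:(unfold in_nodes in Hk; lia)) as [Mk [Ek Hk']].
  assert (Mk <> 0%nat) by (intro; subst; simpl in Ek; unfold in_nodes in Hk; lia).
  exists (Mi + Mk)%nat.
  exists (fun m => if Nat.leb m Mi then Nat.iter m sigma i else Nat.iter (Mi + Mk - m) sigma k).
  split; [|split].
  - simpl. auto.
  - destruct (Nat.leb_spec (Mi + Mk) Mi). lia. replace (Mi + Mk - (Mi + Mk))%nat with 0%nat by lia. auto.
  - intros m Hm. destruct (Nat.leb_spec m Mi); destruct (Nat.leb_spec (S m) Mi).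
    + left. split. apply (iter_nodes_lt N sigma i Mi); auto; lia. rewrite Nat.iter_succ. auto.
    + assert (m = Mi) by lia. subst m. right. split.
      apply (iter_nodes_lt N sigma k Mk); auto; lia.
      rewrite <- Nat.iter_succ. replace (S (Mi + Mk - S Mi)) with Mk by lia. congruence.
    + lia.
    + right. split. apply (iter_nodes_lt N sigma k Mk); auto; lia.
      rewrite <- Nat.iter_succ. f_equal. lia. Qed.

Lemma phi_diam N sigma d i k : is_radial_tree N sigma -> is_diameter N sigma d ->
  in_nodes N i -> in_nodes N k -> (tphi sigma k i <= d)%nat.
Proof. intros T [Hd _] Hi Hk. destruct (walk_ex N sigma i k T Hi Hk) as [n Hn].
  destruct (least_ex (is_walk N sigma i k) n Hn) as [n0 [W0 L0]].
  assert (is_dist N sigma i k n0).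
  { split; auto. intros m Hm. destruct (Nat.le_gt_cases n0 m); auto. exfalso; eapply L0; eauto. }
  assert (n0 <= d)%nat by (apply (Hd i k n0); auto).
  assert (tphi sigma k i <= n0)%nat by (apply (walk_phi N); auto; unfold in_nodes in *; lia). lia. Qed.

Lemma D1 N sigma c i k : is_radial_tree N sigma -> in_nodes N k -> in_nodes N c -> in_nodes N i ->
  sigma c = i -> on_path N sigma c k = true -> (tphi sigma k c + 1 <= tphi sigma k i)%nat.
Proof. intros T Hk Hc Hi Ec H. apply on_path_iff' in H; auto. destruct H as [h [Eh Hh]].
  assert (Hk' : (k <= N)%nat) by (unfold in_nodes in Hk; lia).
  assert (L1: (tphi sigma k c <= h)%nat).
  { apply (phi_le N); auto. unfold in_nodes in Hc; lia. exists 0%nat, h. repeat split; auto. intros; lia. intros; apply Hh; lia. }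
  destruct (phi_meet N sigma k i T Hk' ltac:(unfold in_nodes in Hi; lia)) as [m1 [m2 [E1 [E2 [H1 H2]]]]].
  assert (Es : Nat.iter (S h) sigma k = i) by (simpl; rewrite Eh; auto).
  assert (Nat.iter (m1 + S h) sigma k = Nat.iter m2 sigma k) by (rewrite Nat.iter_add, Es; auto).
  assert (m1 + S h = m2)%nat.
  { eapply (iter_inj N sigma k); eauto.
    intros m' Hm'. destruct (Nat.le_gt_cases m' h). apply Hh; auto.
    replace m' with ((m' - S h) + S h)%nat by lia. rewrite Nat.iter_add, Es. apply H1. lia. }
  lia. Qed.

Lemma D3 N sigma j i k : is_radial_tree N sigma -> in_nodes N k -> in_nodes N j -> in_nodes N i ->
  sigma j = i -> on_path N sigma j k = false -> (tphi sigma k i + 1 <= tphi sigma k j)%nat.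
Proof. intros T Hk Hj Hi Ej H.
  assert (Hk' : (k <= N)%nat) by (unfold in_nodes in Hk; lia).
  destruct (phi_meet N sigma k j T Hk' ltac:(unfold in_nodes in Hj; lia)) as [m1 [m2 [E1 [E2 [H1 H2]]]]].
  destruct m1 as [|m1].
  - exfalso. simpl in E2. assert (on_path N sigma j k = true); [|congruence].
    apply on_path_iff'; auto. exists m2. split; auto. intros m' Hm'. destruct (Nat.eq_dec m' m2).
    subst m'. rewrite <- E2. unfold in_nodes in Hj; lia. apply H2; lia.
  - assert (tphi sigma k i <= m1 + m2)%nat; [|lia]. apply (phi_le N); auto. unfold in_nodes in Hi; lia.
    exists m1, m2. repeat split; auto. rewrite <- Ej, <- Nat.iter_succ_r. auto.
    intros m' Hm'. rewrite <- Ej, <- Nat.iter_succ_r. apply H1; lia. Qed.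

Lemma phi_pos N sigma j k : is_radial_tree N sigma -> in_nodes N k -> in_nodes N j ->
  on_path N sigma j k = false -> (1 <= tphi sigma k j)%nat.
Proof. intros T Hk Hj H. destruct (Nat.le_gt_cases 1 (tphi sigma k j)); auto. exfalso.
  destruct (phi_meet N sigma k j T ltac:(unfold in_nodes in Hk; lia) ltac:(unfold in_nodes in Hj; lia)) as [m1 [m2 [E1 [E2 _]]]].
  assert (m1 = 0%nat /\ m2 = 0%nat) as [-> ->] by lia. simpl in E2. subst. rewrite on_path_refl in H; auto. discriminate. Qed.

Definition Var (lam : nat -> nat -> R) (k : nat) (t : Z) (B : nat) : R :=
  sum_lt B (fun m => Rabs (at_time lam (t - 1 - Z.of_nat m) k - at_time lam (t - Z.of_nat m) k)).

Definition Good N (lam : nat -> nat -> R) (Q : R) (w : nat -> R) (s : Z) (B : nat -> nat) : Prop :=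
  Rabs (Q - sum_to N (fun k => w k * at_time lam s k)) <= sum_to N (fun k => Rabs (w k) * Var lam k s (B k)).

Lemma Var_nonneg lam k t B : 0 <= Var lam k t B.
Proof. apply sum_lt_nonneg. intros; apply Rabs_pos. Qed.

Lemma Var_mono lam k t B B' : (B <= B')%nat -> Var lam k t B <= Var lam k t B'.
Proof. intros H. apply sum_lt_mono; auto. intros; apply Rabs_pos. Qed.

Lemma Var_diff lam k t d : Rabs (at_time lam (t - Z.of_nat d) k - at_time lam t k) <= Var lam k t d.
Proof. induction d; unfold Var in *; cbn [sum_lt].
  - replace (t - Z.of_nat 0)%Z with t by lia. rewrite Rminus_diag, Rabs_R0. lra.
  - replace (t - Z.of_nat (S d))%Z with (t - 1 - Z.of_nat d)%Z by lia.
    eapply Rle_trans. 2: apply Rplus_le_compat_r; apply IHd.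
    replace (at_time lam (t - 1 - Z.of_nat d) k - at_time lam t k) with
      ((at_time lam (t - 1 - Z.of_nat d) k - at_time lam (t - Z.of_nat d) k) + (at_time lam (t - Z.of_nat d) k - at_time lam t k)) by ring.
    eapply Rle_trans. apply Rabs_triang. lra. Qed.

Lemma Var_split lam k t a B : Var lam k t (a + B) = Var lam k t a + Var lam k (t - Z.of_nat a) B.
Proof. unfold Var. rewrite sum_lt_split. f_equal. apply sum_lt_ext. intros m _.
  do 2 f_equal; [replace (t - Z.of_nat a - 1 - Z.of_nat m)%Z with (t - 1 - Z.of_nat (a + m))%Z by lia|
   replace (t - Z.of_nat a - Z.of_nat m)%Z with (t - Z.of_nat (a + m))%Z by lia]; auto. Qed.

Lemma Good_ext N lam Q Q' w w' s B : Q = Q' -> (forall k, in_nodes N k -> w k = w' k) ->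
  Good N lam Q w s B -> Good N lam Q' w' s B.
Proof. unfold Good. intros -> H G. rewrite (sum_to_ext N _ (fun k => w k * at_time lam s k)).
  rewrite (sum_to_ext N (fun k => Rabs (w' k) * _) (fun k => Rabs (w k) * Var lam k s (B k))). auto.
  intros; rewrite H; auto. intros; rewrite H; auto. Qed.

Lemma Good_weaken N lam Q w s B B' : (forall k, in_nodes N k -> w k <> 0 -> (B k <= B' k)%nat) ->
  Good N lam Q w s B -> Good N lam Q w s B'.
Proof. unfold Good. intros H G. eapply Rle_trans; [apply G|]. apply sum_to_le. intros k Hk.
  destruct (Req_dec (w k) 0) as [E|E]. rewrite E, Rabs_R0. lra.
  apply Rmult_le_compat_l. apply Rabs_pos. apply Var_mono. apply H; auto. Qed.

Lemma Good_shift N lam Q w s t B : (s <= t)%Z -> Good N lam Q w s B ->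
  Good N lam Q w t (fun k => (B k + Z.to_nat (t - s))%nat).
Proof. unfold Good. intros Hst G. set (a := Z.to_nat (t - s)).
  assert (Es : s = (t - Z.of_nat a)%Z) by (unfold a; lia).
  replace (Q - sum_to N (fun k => w k * at_time lam t k)) with
    ((Q - sum_to N (fun k => w k * at_time lam s k)) + sum_to N (fun k => w k * (at_time lam s k - at_time lam t k))).
  2: { rewrite (sum_to_ext N (fun k => w k * (at_time lam s k - at_time lam t k)) (fun k => w k * at_time lam s k - w k * at_time lam t k)) by (intros; ring).
       rewrite sum_to_minus. ring. }
  eapply Rle_trans. apply Rabs_triang. eapply Rle_trans. apply Rplus_le_compat_r. apply G.
  eapply Rle_trans. apply Rplus_le_compat_l. apply sum_to_abs.
  rewrite <- sum_to_plus. apply sum_to_le. intros k _.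
  rewrite Nat.add_comm, Var_split, <- Es, Rabs_mult.
  assert (Rabs (at_time lam s k - at_time lam t k) <= Var lam k t a) by (rewrite Es; apply Var_diff).
  assert (0 <= Rabs (w k)) by apply Rabs_pos. nra. Qed.

Lemma Good_neg N lam w s B : (s < 0)%Z -> Good N lam 0 w s B.
Proof. unfold Good. intros H. rewrite sum_to_zero. rewrite Rminus_0_r, Rabs_R0.
  apply sum_to_nonneg; intros; apply Rmult_le_pos; [apply Rabs_pos|apply Var_nonneg].
  intros k _. unfold at_time. destruct (Z.ltb_spec s 0); [ring|lia]. Qed.

Lemma Good_time0 N lam w B : (forall k, in_nodes N k -> lam 0%nat k = 0) -> Good N lam 0 w 0%Z B.
Proof. unfold Good. intros H. rewrite sum_to_zero. rewrite Rminus_0_r, Rabs_R0.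
  apply sum_to_nonneg; intros; apply Rmult_le_pos; [apply Rabs_pos|apply Var_nonneg].
  intros k Hk. unfold at_time. simpl. rewrite H; auto. ring. Qed.

Lemma Good_zero N lam w s B : (forall k, in_nodes N k -> w k = 0) -> Good N lam 0 w s B.
Proof. unfold Good. intros H. rewrite sum_to_zero. rewrite Rminus_0_r, Rabs_R0.
  apply sum_to_nonneg; intros; apply Rmult_le_pos; [apply Rabs_pos|apply Var_nonneg].
  intros k Hk. rewrite H; auto. ring. Qed.

Lemma at_time_nat (f : nat -> nat -> R) t k : at_time f (Z.of_nat t) k = f t k.
Proof. unfold at_time. destruct (Z.ltb_spec (Z.of_nat t) 0); [lia|]. rewrite Nat2Z.id; auto. Qed.

Lemma Good_lam N lam t i B : in_nodes N i ->
  Good N lam (lam t i) (fun k => if Nat.eqb k i then 1 else 0) (Z.of_nat t) B.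
Proof. unfold Good. intros Hi.
  rewrite (sum_to_ext N _ (fun k => if Nat.eqb k i then at_time lam (Z.of_nat t) k else 0)).
  rewrite sum_to_delta by (unfold in_nodes in Hi; lia). rewrite at_time_nat, Rminus_diag, Rabs_R0.
  apply sum_to_nonneg; intros; apply Rmult_le_pos; [apply Rabs_pos|apply Var_nonneg].
  intros k _. destruct (Nat.eqb k i); ring. Qed.

Lemma Good_scale N lam Q w s B c : Good N lam Q w s B -> Good N lam (c * Q) (fun k => c * w k) s B.
Proof. unfold Good. intros G.
  rewrite (sum_to_ext N (fun k => c * w k * _) (fun k => c * (w k * at_time lam s k))) by (intros; ring).
  rewrite sum_to_scal.
  rewrite (sum_to_ext N (fun k => Rabs (c * w k) * _) (fun k => Rabs c * (Rabs (w k) * Var lam k s (B k)))) by (intros; rewrite Rabs_mult; ring).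
  rewrite sum_to_scal. replace (c * Q - c * sum_to N (fun k => w k * at_time lam s k)) with (c * (Q - sum_to N (fun k => w k * at_time lam s k))) by ring.
  rewrite Rabs_mult. apply Rmult_le_compat_l; auto. apply Rabs_pos. Qed.

Lemma Good_add N lam Q1 Q2 w1 w2 s B : Good N lam Q1 w1 s B -> Good N lam Q2 w2 s B ->
  (forall k, in_nodes N k -> Rabs (w1 k + w2 k) = Rabs (w1 k) + Rabs (w2 k)) ->
  Good N lam (Q1 + Q2) (fun k => w1 k + w2 k) s B.
Proof. unfold Good. intros G1 G2 H.
  replace (Q1 + Q2 - sum_to N (fun k => (w1 k + w2 k) * at_time lam s k)) with
    ((Q1 - sum_to N (fun k => w1 k * at_time lam s k)) + (Q2 - sum_to N (fun k => w2 k * at_time lam s k))).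
  2:{ rewrite (sum_to_ext N (fun k => (w1 k + w2 k) * _) (fun k => w1 k * at_time lam s k + w2 k * at_time lam s k)) by (intros; ring). rewrite sum_to_plus. ring. }
  eapply Rle_trans. apply Rabs_triang.
  rewrite (sum_to_ext N (fun k => Rabs (w1 k + w2 k) * _) (fun k => Rabs (w1 k) * Var lam k s (B k) + Rabs (w2 k) * Var lam k s (B k))) by (intros; rewrite H; auto; ring).
  rewrite sum_to_plus. lra. Qed.

Lemma Rabs_add_nonneg a b : 0 <= a -> 0 <= b -> Rabs (a + b) = Rabs a + Rabs b.
Proof. intros; rewrite !Rabs_right; lra. Qed.

Lemma Good_sum N lam n (Q : nat -> R) (W : nat -> nat -> R) s B :
  (forall c, (1 <= c <= n)%nat -> Good N lam (Q c) (W c) s B) ->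
  (forall c k, (1 <= c <= n)%nat -> in_nodes N k -> 0 <= W c k) ->
  Good N lam (sum_to n Q) (fun k => sum_to n (fun c => W c k)) s B.
Proof. induction n; intros HG HW; cbn [sum_to].
  - apply Good_zero. auto.
  - apply Good_add. apply IHn; intros; [apply HG|apply HW]; auto; lia. apply HG; lia.
    intros k Hk. apply Rabs_add_nonneg. apply sum_to_nonneg. intros; apply HW; auto; lia. apply HW; auto; lia. Qed.

Lemma delayed_at (f : nat -> nat -> R) t tau j : delayed f t tau j = at_time f (Z.of_nat (S t) - Z.of_nat tau) j.
Proof. unfold delayed, at_time. destruct (Nat.ltb_spec (S t) tau); destruct (Z.ltb_spec (Z.of_nat (S t) - Z.of_nat tau) 0); try lia; auto.
  f_equal. lia. Qed.

Lemma sum_but_eq N sigma i j f : in_nodes N j -> sigma j = i ->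
  sum_children_but N sigma i j f = sum_children N sigma i f - f j.
Proof. intros Hj Ej. unfold sum_children_but, sum_children.
  assert (E: sum_to N (fun r => if Nat.eqb (sigma r) i then f r else 0) -
     sum_to N (fun r => if Nat.eqb (sigma r) i && negb (Nat.eqb r j) then f r else 0) =
     sum_to N (fun r => if Nat.eqb r j then (if Nat.eqb (sigma r) i then f r else 0) else 0)).
  { rewrite <- sum_to_minus. apply sum_to_ext. intros c _. destruct (Nat.eqb_spec c j); destruct (Nat.eqb (sigma c) i); simpl; ring. }
  rewrite sum_to_delta in E by (unfold in_nodes in Hj; lia). rewrite Ej, Nat.eqb_refl in E. lra. Qed.

Lemma Good_delay N lam (F : nat -> nat -> R) j w B t tau tmax :
  (tau <= tmax)%nat -> (forall u, (u <= t)%nat -> Good N lam (F u j) w (Z.of_nat u) B) ->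
  Good N lam (at_time F (Z.of_nat t - Z.of_nat tau) j) w (Z.of_nat t) (fun k => B k + tmax)%nat.
Proof. intros Ht H. set (s := (Z.of_nat t - Z.of_nat tau)%Z).
  destruct (Z.ltb_spec s 0).
  - unfold at_time at 1. rewrite (proj2 (Z.ltb_lt s 0)) by auto.
    eapply Good_weaken; [|apply (Good_shift N lam 0 w s (Z.of_nat t) B); [lia|apply Good_neg; auto]].
    intros; simpl. unfold s. lia.
  - set (u := Z.to_nat s). assert (Eu : s = Z.of_nat u) by (unfold u; lia).
    replace (at_time F s j) with (F u j) by (rewrite Eu, at_time_nat; auto).
    eapply Good_weaken; [|apply (Good_shift N lam _ w (Z.of_nat u) (Z.of_nat t) B); [lia|apply H; lia]].
    intros; simpl. lia. Qed.

Definition wa N sigma (j k : nat) : R := IND (on_path N sigma j k).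
Definition wb N sigma r (j k : nat) : R := if on_path N sigma j k then 0 else Rmat N sigma r (sigma j) k.

Definition Side N sigma r (tau_max : nat) (tau_up tau_dn : nat -> nat -> nat)
  (lam alpha alphah beta betah z : nat -> nat -> R) : Prop :=
  (forall i, in_nodes N i -> lam 0%nat i = 0 /\ alpha 0%nat i = 0 /\ beta 0%nat i = 0 /\
      alphah 0%nat i = 0 /\ betah 0%nat i = 0 /\ z 0%nat i = 0) /\
  (forall i t, in_nodes N i -> sigma i = 0%nat -> betah t i = 0) /\
  (forall t i, in_nodes N i -> alpha (S t) i = lam (S t) i + sum_children N sigma i (alphah t)) /\
  (forall t i j, in_nodes N i -> in_nodes N j -> sigma j = i ->
     beta (S t) j = Rmat N sigma r i i * (lam (S t) i + sum_children_but N sigma i j (alphah t)) + betah t i) /\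
  (forall t i, in_nodes N i -> sigma i <> 0%nat ->
     alphah (S t) i = delayed alpha t (tau_up i t) i /\ betah (S t) i = delayed beta t (tau_dn i t) i) /\
  (forall t i, in_nodes N i ->
     z (S t) i = Rmat N sigma r i i * (lam (S t) i + sum_children N sigma i (alphah (S t))) + betah (S t) i) /\
  (forall j t, in_nodes N j -> sigma j <> 0%nat -> (tau_up j t <= tau_max)%nat /\ (tau_dn j t <= tau_max)%nat).

Definition Calpha N sigma lam alpha T t : Prop := forall j, in_nodes N j ->
  Good N lam (alpha t j) (wa N sigma j) (Z.of_nat t) (fun k => T * tphi sigma k j)%nat.
Definition Cbeta N sigma r lam beta T t : Prop := forall j, in_nodes N j -> in_nodes N (sigma j) ->
  Good N lam (beta t j) (wb N sigma r j) (Z.of_nat t) (fun k => T * tphi sigma k j - T)%nat.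

Lemma wa_nonneg N sigma j k : 0 <= wa N sigma j k.
Proof. unfold wa, IND. destruct on_path; lra. Qed.

Lemma parent_in N sigma i : is_radial_tree N sigma -> in_nodes N i -> sigma i <> 0%nat -> in_nodes N (sigma i).
Proof. intros T Hi H. destruct (T i Hi). unfold in_nodes; lia. Qed.

Lemma hatA N sigma r tau_max tau_up tau_dn lam alpha alphah beta betah z t j :
  Side N sigma r tau_max tau_up tau_dn lam alpha alphah beta betah z ->
  (forall u, (u <= t)%nat -> Calpha N sigma lam alpha (S tau_max) u) ->
  in_nodes N j -> sigma j <> 0%nat ->
  Good N lam (alphah t j) (wa N sigma j) (Z.of_nat t) (fun k => S tau_max * tphi sigma k j + tau_max)%nat.
Proof. intros [H0 [Hr [Ha [Hb [Hh [Hz Ht]]]]]] C Hj Hs. destruct t as [|t].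
  - replace (alphah 0%nat j) with 0 by (symmetry; apply H0; auto). apply Good_time0. intros; apply H0; auto.
  - rewrite (proj1 (Hh t j Hj Hs)), delayed_at. apply Good_delay. apply (Ht j t Hj Hs).
    intros u Hu. apply C; auto. Qed.

Lemma hatB N sigma r tau_max tau_up tau_dn lam alpha alphah beta betah z t j :
  is_radial_tree N sigma ->
  Side N sigma r tau_max tau_up tau_dn lam alpha alphah beta betah z ->
  (forall u, (u <= t)%nat -> Cbeta N sigma r lam beta (S tau_max) u) ->
  in_nodes N j -> sigma j <> 0%nat ->
  Good N lam (betah t j) (wb N sigma r j) (Z.of_nat t) (fun k => S tau_max * tphi sigma k j - S tau_max + tau_max)%nat.
Proof. intros T [H0 [Hr [Ha [Hb [Hh [Hz Ht]]]]]] C Hj Hs. destruct t as [|t].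
  - replace (betah 0%nat j) with 0 by (symmetry; apply H0; auto). apply Good_time0. intros; apply H0; auto.
  - rewrite (proj2 (Hh t j Hj Hs)), delayed_at. apply Good_delay. apply (Ht j t Hj Hs).
    intros u Hu. apply C; auto. apply parent_in; auto. Qed.

Lemma Asum N sigma i k : is_radial_tree N sigma -> in_nodes N i -> in_nodes N k ->
  (if Nat.eqb k i then 1 else 0) + sum_to N (fun c => if Nat.eqb (sigma c) i then wa N sigma c k else 0) = wa N sigma i k.
Proof. intros T Hi Hk. unfold wa. rewrite (T1 N sigma i k T Hi Hk). unfold IND at 2. reflexivity. Qed.

Lemma Abut N sigma i j k : is_radial_tree N sigma -> in_nodes N i -> in_nodes N j -> in_nodes N k -> sigma j = i ->
  (if Nat.eqb k i then 1 else 0) + sum_to N (fun c => if Nat.eqb (sigma c) i && negb (Nat.eqb c j) then wa N sigma c k else 0)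
  = wa N sigma i k - wa N sigma j k.
Proof. intros T Hi Hj Hk E.
  assert (H := sum_but_eq N sigma i j (fun c => wa N sigma c k) Hj E). unfold sum_children_but, sum_children in H.
  rewrite H. rewrite <- (Asum N sigma i k) by auto. ring. Qed.

Lemma wa_cases N sigma j k : wa N sigma j k = 0 \/ (wa N sigma j k = 1 /\ on_path N sigma j k = true).
Proof. unfold wa, IND. destruct on_path; auto. Qed.

Lemma Tmul_le (T a b : nat) : (a <= b)%nat -> (T * a <= T * b)%nat.
Proof. intros; apply Nat.mul_le_mono_l; auto. Qed.

Lemma stepA N sigma r tau_max tau_up tau_dn lam alpha alphah beta betah z t :
  is_radial_tree N sigma ->
  Side N sigma r tau_max tau_up tau_dn lam alpha alphah beta betah z ->
  (forall u, (u <= t)%nat -> Calpha N sigma lam alpha (S tau_max) u) ->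
  Calpha N sigma lam alpha (S tau_max) (S t).
Proof. intros T HS C. pose proof HS as [H0 [Hr [Ha [Hb [Hh [Hz Ht]]]]]]. intros j Hj. rewrite Ha by auto.
  eapply Good_ext; [reflexivity| |].
  2: { apply Good_add. apply Good_lam; auto.
       apply (Good_sum N lam N (fun c => if Nat.eqb (sigma c) j then alphah t c else 0)
                (fun c k => if Nat.eqb (sigma c) j then wa N sigma c k else 0)).
       - intros c Hc. destruct (Nat.eqb_spec (sigma c) j).
         + assert (Hs : sigma c <> 0%nat) by (unfold in_nodes in Hj; lia).
           eapply Good_weaken; [| apply (Good_shift N lam _ _ (Z.of_nat t) (Z.of_nat (S t))); [lia| apply (hatA N sigma r tau_max tau_up tau_dn lam alpha alphah beta betah z t c HS C Hc Hs)]].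
           intros k Hk Hw. destruct (wa_cases N sigma c k) as [E|[_ E]]; [contradiction|].
           assert (D := D1 N sigma c j k T Hk Hc Hj e E). assert (M := Tmul_le (S tau_max) _ _ D). lia.
         + apply Good_zero. auto.
       - intros; destruct (Nat.eqb (sigma c) j); [apply wa_nonneg| lra].
       - intros k Hk. apply Rabs_add_nonneg. destruct (Nat.eqb k j); lra.
         apply sum_to_nonneg; intros; destruct (Nat.eqb (sigma i) j); [apply wa_nonneg| lra]. }
  intros k Hk. apply Asum; auto. Qed.

Lemma wb_root N sigma r i k : sigma i = 0%nat -> wb N sigma r i k = 0.
Proof. intros E. unfold wb. rewrite E, Rmat_0. destruct on_path; auto. Qed.

Lemma stepB N sigma r tau_max tau_up tau_dn lam alpha alphah beta betah z t :
  is_radial_tree N sigma ->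
  Side N sigma r tau_max tau_up tau_dn lam alpha alphah beta betah z ->
  (forall u, (u <= t)%nat -> Calpha N sigma lam alpha (S tau_max) u) ->
  (forall u, (u <= t)%nat -> Cbeta N sigma r lam beta (S tau_max) u) ->
  Cbeta N sigma r lam beta (S tau_max) (S t).
Proof. intros T HS CA CB. pose proof HS as [H0 [Hr [Ha [Hb [Hh [Hz Ht]]]]]]. intros j Hj Hi.
  set (i := sigma j) in *. rewrite (Hb t i j) by auto.
  assert (Hpj : forall k, in_nodes N k -> on_path N sigma j k = true -> on_path N sigma i k = true).
  { intros k Hk H. apply (on_path_up N sigma j i k); auto. }
  eapply (Good_ext N lam _ _ (fun k => Rmat N sigma r i i * ((if Nat.eqb k i then 1 else 0) + sum_to N (fun c => if Nat.eqb (sigma c) i && negb (Nat.eqb c j) then wa N sigma c k else 0)) + wb N sigma r i k)); [reflexivity| |].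
  2: { apply Good_add.
    - apply Good_scale. apply Good_add. apply Good_lam; auto.
       apply (Good_sum N lam N (fun c => if Nat.eqb (sigma c) i && negb (Nat.eqb c j) then alphah t c else 0)
                (fun c k => if Nat.eqb (sigma c) i && negb (Nat.eqb c j) then wa N sigma c k else 0)).
       + intros c Hc. destruct (Nat.eqb_spec (sigma c) i); destruct (Nat.eqb_spec c j); simpl.
         * apply Good_zero. auto.
         * assert (Hs : sigma c <> 0%nat) by (unfold in_nodes in Hi; lia).
           eapply Good_weaken; [| apply (Good_shift N lam _ _ (Z.of_nat t) (Z.of_nat (S t))); [lia| apply (hatA N sigma r tau_max tau_up tau_dn lam alpha alphah beta betah z t c HS CA Hc Hs)]].
           intros k Hk Hw. destruct (wa_cases N sigma c k) as [E|[_ E]]; [contradiction|].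
           assert (Ej : on_path N sigma j k = false).
           { destruct (on_path N sigma j k) eqn:E2; auto. exfalso. apply n.
             apply (child_unique N sigma c j k T Hk E E2); [rewrite e; reflexivity|]. rewrite e. unfold in_nodes in Hi; lia. }
           assert (D := D1 N sigma c i k T Hk Hc Hi e E).
           assert (D' := D3 N sigma j i k T Hk Hj Hi eq_refl Ej).
           assert (M := Tmul_le (S tau_max) (tphi sigma k c + 2) (tphi sigma k j) ltac:(lia)). lia.
         * apply Good_zero. auto.
         * apply Good_zero. auto.
       + intros; destruct (_ && _); [apply wa_nonneg| lra].
       + intros k Hk. apply Rabs_add_nonneg. destruct (Nat.eqb k i); lra.
         apply sum_to_nonneg; intros; destruct (_ && _); [apply wa_nonneg| lra].
    - destruct (Nat.eq_dec (sigma i) 0).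
      + rewrite Hr by auto. apply Good_zero. intros; apply wb_root; auto.
      + eapply Good_weaken; [| apply (Good_shift N lam _ _ (Z.of_nat t) (Z.of_nat (S t))); [lia| apply (hatB N sigma r tau_max tau_up tau_dn lam alpha alphah beta betah z t i T HS CB Hi n)]].
        intros k Hk Hw. unfold wb in Hw. destruct (on_path N sigma i k) eqn:E; [lra|].
        assert (P := phi_pos N sigma i k T Hk Hi E).
        assert (Ej : on_path N sigma j k = false).
        { destruct (on_path N sigma j k) eqn:E2; auto. rewrite (Hpj k Hk E2) in E. discriminate. }
        assert (D' := D3 N sigma j i k T Hk Hj Hi eq_refl Ej).
        assert (M := Tmul_le (S tau_max) (tphi sigma k i + 1) (tphi sigma k j) ltac:(lia)).
        assert (M2 := Tmul_le (S tau_max) 1 (tphi sigma k i) ltac:(lia)). lia.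
    - intros k Hk. rewrite (Abut N sigma i j k T Hi Hj Hk eq_refl).
      unfold wb. destruct (on_path N sigma i k) eqn:E.
      + rewrite Rplus_0_r, Rabs_R0. ring.
      + assert (on_path N sigma j k = false) by (destruct (on_path N sigma j k) eqn:E2; auto; rewrite (Hpj k Hk E2) in E; discriminate).
        unfold wa. rewrite E, H. unfold IND. rewrite Rminus_0_r, Rmult_0_r, Rplus_0_l, Rabs_R0. ring. }
  intros k Hk. rewrite (Abut N sigma i j k T Hi Hj Hk eq_refl). unfold wa, wb, IND.
  destruct (on_path N sigma j k) eqn:Ej.
  - rewrite (Hpj k Hk Ej). ring.
  - fold i. destruct (on_path N sigma i k) eqn:Ei.
    + rewrite (Rmat_in N sigma r i k) by auto. ring.
    + rewrite (Rmat_out N sigma r i k) by auto. ring. Qed.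

Lemma all_C N sigma r tau_max tau_up tau_dn lam alpha alphah beta betah z :
  is_radial_tree N sigma ->
  Side N sigma r tau_max tau_up tau_dn lam alpha alphah beta betah z ->
  forall t u, (u <= t)%nat -> Calpha N sigma lam alpha (S tau_max) u /\ Cbeta N sigma r lam beta (S tau_max) u.
Proof. intros T HS. pose proof HS as [H0 _]. induction t; intros u Hu.
  - replace u with 0%nat by lia. split.
    + intros j Hj. replace (alpha 0%nat j) with 0 by (symmetry; apply H0; auto). apply Good_time0. intros; apply H0; auto.
    + intros j Hj _. replace (beta 0%nat j) with 0 by (symmetry; apply H0; auto). apply Good_time0. intros; apply H0; auto.
  - destruct (Nat.eq_dec u (S t)).
    + subst. split. apply stepA with r tau_up tau_dn alphah beta betah z; auto. intros; apply IHt; auto.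
      apply stepB with tau_up tau_dn alpha alphah betah z; auto; intros; apply IHt; auto.
    + apply IHt. lia. Qed.

Lemma Zgood N sigma r tau_max tau_up tau_dn lam alpha alphah beta betah z :
  is_radial_tree N sigma ->
  Side N sigma r tau_max tau_up tau_dn lam alpha alphah beta betah z ->
  forall t i, in_nodes N i ->
  Good N lam (z t i) (fun k => Rmat N sigma r i k) (Z.of_nat t) (fun k => S tau_max * tphi sigma k i)%nat.
Proof. intros T HS t i Hi. pose proof HS as [H0 [Hr [Ha [Hb [Hh [Hz Ht]]]]]].
  assert (CA : forall u, (u <= t)%nat -> Calpha N sigma lam alpha (S tau_max) u) by (intros; eapply all_C; eauto).
  assert (CB : forall u, (u <= t)%nat -> Cbeta N sigma r lam beta (S tau_max) u) by (intros; eapply all_C; eauto).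
  destruct t as [|t].
  - replace (z 0%nat i) with 0 by (symmetry; apply H0; auto). apply Good_time0. intros; apply H0; auto.
  - rewrite Hz by auto.
    eapply (Good_ext N lam _ _ (fun k => Rmat N sigma r i i * ((if Nat.eqb k i then 1 else 0) + sum_to N (fun c => if Nat.eqb (sigma c) i then wa N sigma c k else 0)) + wb N sigma r i k)); [reflexivity| |].
    2: { apply Good_add.
    - apply Good_scale. apply Good_add. apply Good_lam; auto.
       apply (Good_sum N lam N (fun c => if Nat.eqb (sigma c) i then alphah (S t) c else 0)
                (fun c k => if Nat.eqb (sigma c) i then wa N sigma c k else 0)).
       + intros c Hc. destruct (Nat.eqb_spec (sigma c) i).
         * assert (Hs : sigma c <> 0%nat) by (unfold in_nodes in Hi; lia).
           eapply Good_weaken; [| apply (hatA N sigma r tau_max tau_up tau_dn lam alpha alphah beta betah z (S t) c HS CA Hc Hs)].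
           intros k Hk Hw. destruct (wa_cases N sigma c k) as [E|[_ E]]; [contradiction|].
           assert (D := D1 N sigma c i k T Hk Hc Hi e E). assert (M := Tmul_le (S tau_max) _ _ D). lia.
         * apply Good_zero. auto.
       + intros; destruct (Nat.eqb (sigma c) i); [apply wa_nonneg| lra].
       + intros k Hk. apply Rabs_add_nonneg. destruct (Nat.eqb k i); lra.
         apply sum_to_nonneg; intros; destruct (Nat.eqb (sigma i0) i); [apply wa_nonneg| lra].
    - destruct (Nat.eq_dec (sigma i) 0).
      + rewrite Hr by auto. apply Good_zero. intros; apply wb_root; auto.
      + eapply Good_weaken; [| apply (hatB N sigma r tau_max tau_up tau_dn lam alpha alphah beta betah z (S t) i T HS CB Hi n)].
        intros k Hk Hw. unfold wb in Hw. destruct (on_path N sigma i k) eqn:E; [lra|].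
        assert (P := phi_pos N sigma i k T Hk Hi E).
        assert (M2 := Tmul_le (S tau_max) 1 (tphi sigma k i) P). lia.
    - intros k Hk. rewrite (Asum N sigma i k T Hi Hk). unfold wb, wa, IND.
      destruct (on_path N sigma i k) eqn:E.
      + rewrite Rplus_0_r, Rabs_R0. ring.
      + rewrite Rmult_0_r, Rplus_0_l, Rabs_R0. ring. }
    intros k Hk. rewrite (Asum N sigma i k T Hi Hk). unfold wa, wb, IND.
    destruct (on_path N sigma i k) eqn:Ei.
    + rewrite (Rmat_in N sigma r i k) by auto. ring.
    + rewrite (Rmat_out N sigma r i k) by auto. ring. Qed.

Lemma clamp_in x a b : a <= b -> a <= clamp x a b <= b.
Proof. intros H. unfold clamp, Rmin, Rmax. destruct (Rle_dec x a); destruct (Rle_dec _ b); lra. Qed.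

Lemma clamp_lip x y a b : a <= b -> Rabs (clamp x a b - clamp y a b) <= Rabs (x - y).
Proof. intros H. unfold clamp, Rmin, Rmax.
  destruct (Rle_dec x a); destruct (Rle_dec y a);
  repeat match goal with |- context [Rle_dec ?u ?v] => destruct (Rle_dec u v) end;
  unfold Rabs; repeat match goal with |- context [Rcase_abs ?u] => destruct (Rcase_abs u) end; lra. Qed.

Lemma argmin_clamp a b c lo hi yh : 0 < a -> lo <= hi -> lo <= yh <= hi ->
  (forall y, lo <= y <= hi -> a/2*yh^2 + b*yh - c*yh <= a/2*y^2 + b*y - c*y) ->
  yh = clamp ((c - b)/a) lo hi.
Proof. intros Ha Hlh Hy H. set (u := clamp ((c - b)/a) lo hi).
  assert (Hu := clamp_in ((c-b)/a) lo hi Hlh). fold u in Hu.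
  set (m := (c-b)/a). assert (Em : a * m = c - b) by (unfold m; field; lra).
  assert (Cs: (u = lo /\ m <= lo) \/ u = m \/ (u = hi /\ hi <= m)).
  { unfold u, clamp, Rmin, Rmax. fold m. destruct (Rle_dec m lo); destruct (Rle_dec _ hi); lra. }
  clearbody u m.
  assert (V: (a*u - (c - b)) * (yh - u) >= 0).
  { rewrite <- Em. destruct Cs as [[-> Hm]|[->|[-> Hm]]].
    - replace (a*lo - a*m) with (a*(lo - m)) by ring. assert (0 <= a*(lo-m)) by (apply Rmult_le_pos; lra).
      assert (0 <= a*(lo-m)*(yh-lo)) by (apply Rmult_le_pos; lra). lra.
    - lra.
    - replace (a*hi - a*m) with (- (a*(m - hi))) by ring. assert (0 <= a*(m-hi)) by (apply Rmult_le_pos; lra).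
      assert (0 <= a*(m-hi)*(hi-yh)) by (apply Rmult_le_pos; lra). nra. }
  assert (H1 := H u Hu).
  assert (Q: a/2*u^2 + b*u - c*u + a/2*(yh-u)^2 + (a*u - (c-b))*(yh-u) = a/2*yh^2 + b*yh - c*yh) by field.
  assert (0 <= (yh - u)^2) by apply pow2_ge_0.
  assert ((yh-u)^2 = 0) by nra. assert (yh - u = 0) by nra. lra. Qed.

Definition bump (base : nat -> R) (i : nat) (h : R) : nat -> R := fun k => base k + (if Nat.eqb k i then h else 0).

Lemma bump_norm N base other i h : in_nodes N i ->
  vnorm2 N (fun k => bump base i h k - base k) (fun k => other k - other k) = Rabs h.
Proof. intros Hi. unfold vnorm2, bump.
  rewrite (sum_to_ext N _ (fun k => if Nat.eqb k i then h^2 else 0)).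
  rewrite (sum_to_delta N i (fun _ => h^2)) by (unfold in_nodes in Hi; lia).
  rewrite <- Rsqr_pow2. apply sqrt_Rsqr_abs.
  intros k _. destruct (Nat.eqb k i); ring. Qed.

Lemma bump_sum N base other G1 G2 i h : in_nodes N i ->
  sum_to N (fun k => G1 k * (bump base i h k - base k) + G2 k * (other k - other k)) = h * G1 i.
Proof. intros Hi. unfold bump.
  rewrite (sum_to_ext N _ (fun k => if Nat.eqb k i then G1 k * h else 0)).
  rewrite (sum_to_delta N i (fun k => G1 k * h)) by (unfold in_nodes in Hi; lia). ring.
  intros k _. destruct (Nat.eqb k i); ring. Qed.

Lemma bump_sum2 N base other G1 G2 i h : in_nodes N i ->
  sum_to N (fun k => G1 k * (other k - other k) + G2 k * (bump base i h k - base k)) = h * G2 i.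
Proof. intros Hi. unfold bump.
  rewrite (sum_to_ext N _ (fun k => if Nat.eqb k i then G2 k * h else 0)).
  rewrite (sum_to_delta N i (fun k => G2 k * h)) by (unfold in_nodes in Hi; lia). ring.
  intros k _. destruct (Nat.eqb k i); ring. Qed.

Lemma eps_zero x : (forall eps, 0 < eps -> Rabs x <= eps) -> x = 0.
Proof. intros H. destruct (Req_dec x 0); auto. exfalso. assert (0 < Rabs x) by (apply Rabs_pos_lt; auto).
  assert (Rabs x <= Rabs x / 2) by (apply H; lra). lra. Qed.

Lemma Rabs_le_inv x a : Rabs x <= a -> - a <= x <= a.
Proof. unfold Rabs. destruct (Rcase_abs x); intros; lra. Qed.

Lemma bump_norm2 N base other i h : in_nodes N i ->
  vnorm2 N (fun k => other k - other k) (fun k => bump base i h k - base k) = Rabs h.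
Proof. intros Hi. unfold vnorm2, bump.
  rewrite (sum_to_ext N _ (fun k => if Nat.eqb k i then h^2 else 0)).
  rewrite (sum_to_delta N i (fun _ => h^2)) by (unfold in_nodes in Hi; lia).
  rewrite <- Rsqr_pow2. apply sqrt_Rsqr_abs.
  intros k _. destruct (Nat.eqb k i); ring. Qed.

Lemma two_sided (x eps del : R) : 0 < del -> (forall h, Rabs h < del -> h * x <= eps * Rabs h) -> Rabs x <= eps.
Proof. intros Hd K.
    assert (K1 := K (del/2) ltac:(rewrite Rabs_right; lra)).
    assert (K2 := K (-(del/2)) ltac:(rewrite Rabs_left; lra)).
    rewrite Rabs_right in K1 by lra. rewrite Rabs_left in K2 by lra.
    apply Rabs_le. split.
    + assert (- x <= eps); [|lra]. apply (Rmult_le_reg_l (del/2)); lra.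
    + apply (Rmult_le_reg_l (del/2)); lra. Qed.

Lemma grad_unique N F llo lhi Glo Ghi glo ghi :
  is_gradient N F llo lhi Glo Ghi ->
  (forall mlo mhi, F mlo mhi - F llo lhi <= sum_to N (fun k => glo k * (mlo k - llo k) + ghi k * (mhi k - lhi k))) ->
  forall i, in_nodes N i -> Glo i = glo i /\ Ghi i = ghi i.
Proof. intros HG Hsup i Hi. split.
  - assert (Glo i - glo i = 0); [|lra]. apply eps_zero. intros eps He.
    destruct (HG eps He) as [del [Hd Hm]]. apply (two_sided _ _ del Hd).
    intros h Hh. assert (M := Hm (bump llo i h) lhi). rewrite bump_norm, bump_sum in M by auto.
    specialize (M Hh). assert (S := Hsup (bump llo i h) lhi). rewrite bump_sum in S by auto.
    apply Rabs_le_inv in M. lra.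
  - assert (Ghi i - ghi i = 0); [|lra]. apply eps_zero. intros eps He.
    destruct (HG eps He) as [del [Hd Hm]]. apply (two_sided _ _ del Hd).
    intros h Hh. assert (M := Hm llo (bump lhi i h)). rewrite bump_norm2, bump_sum2 in M by auto.
    specialize (M Hh). assert (S := Hsup llo (bump lhi i h)). rewrite bump_sum2 in S by auto.
    apply Rabs_le_inv in M. lra. Qed.

Lemma sum_to_ge_term n f i : (forall k, (1 <= k <= n)%nat -> 0 <= f k) -> (1 <= i <= n)%nat -> f i <= sum_to n f.
Proof. induction n; intros H Hi; [lia|]. cbn [sum_to]. destruct (Nat.eq_dec i (S n)).
  - subst. assert (0 <= sum_to n f) by (apply sum_to_nonneg; intros; apply H; lia). lra.
  - assert (f i <= sum_to n f) by (apply IHn; [intros; apply H|]; lia). assert (0 <= f (S n)) by (apply H; lia). lra. Qed.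

Lemma vnorm_scale N c x : vnorm N (fun k => c * x k) = Rabs c * vnorm N x.
Proof. unfold vnorm. rewrite (sum_to_ext N _ (fun k => c^2 * x k ^2)) by (intros; ring).
  rewrite sum_to_scal, sqrt_mult_alt by apply pow2_ge_0. rewrite <- Rsqr_pow2, sqrt_Rsqr_abs. auto. Qed.

Lemma matvec_scale N A c x k : matvec N A (fun j => c * x j) k = c * matvec N A x k.
Proof. unfold matvec. rewrite <- sum_to_scal. apply sum_to_ext; intros; ring. Qed.

Lemma spec_nonneg N A M : is_spectral_norm N A M -> 0 <= M.
Proof. intros [Hub _]. apply Hub. exists (fun _ => 0). unfold vnorm.
  rewrite (sum_to_zero N (fun i => 0 ^ 2)) by (intros; ring). rewrite sqrt_0. split; [lra|].
  rewrite (sum_to_zero N (fun i => matvec N A (fun _ => 0) i ^ 2)). rewrite sqrt_0; auto.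
  intros. unfold matvec. rewrite sum_to_zero. ring. intros; ring. Qed.

Lemma spec_bound N A M x : is_spectral_norm N A M -> vnorm N (matvec N A x) <= M * vnorm N x.
Proof. intros HM. assert (HM0 := spec_nonneg N A M HM). destruct HM as [Hub _].
  assert (Hs := vnorm_nonneg N x). destruct (Req_dec (vnorm N x) 0) as [E|E].
  - assert (Z: forall k, in_nodes N k -> x k = 0).
    { intros k Hk. unfold vnorm in E. apply sqrt_eq_0 in E; [|apply sumsq_nonneg].
      assert (x k ^ 2 <= sum_to N (fun i => x i ^ 2)) by (apply (sum_to_ge_term N (fun i => x i ^ 2)); auto; intros; apply pow2_ge_0).
      assert (0 <= x k ^2) by apply pow2_ge_0. nra. }
    rewrite E. unfold vnorm. rewrite (sum_to_zero N (fun i => matvec N A x i ^ 2)). rewrite sqrt_0; lra.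
    intros i _. unfold matvec. rewrite sum_to_zero. ring. intros j Hj. rewrite Z; auto. ring.
  - set (s := vnorm N x) in *. assert (Hsp : 0 < s) by lra.
    assert (H1 : vnorm N (fun k => / s * x k) = 1) by (rewrite vnorm_scale, Rabs_right; fold s; [field; lra| apply Rle_ge, Rlt_le, Rinv_0_lt_compat; lra]).
    assert (H2 : vnorm N (matvec N A (fun k => / s * x k)) <= M) by (apply Hub; exists (fun k => / s * x k); split; [lra|auto]).
    unfold vnorm in H2 at 1. rewrite (sum_to_ext N (fun i => matvec N A (fun k => / s * x k) i ^ 2) (fun i => (/ s * matvec N A x i) ^2)) in H2 by (intros; rewrite matvec_scale; auto).
    change (vnorm N (fun i => / s * matvec N A x i) <= M) in H2. rewrite vnorm_scale, Rabs_right in H2 by (apply Rle_ge; apply Rlt_le, Rinv_0_lt_compat; lra).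
    apply (Rmult_le_compat_l s) in H2; [|lra]. replace (s * (/ s * vnorm N (matvec N A x))) with (vnorm N (matvec N A x)) in H2 by (field; lra). lra. Qed.

Lemma row_bound N A M i : is_spectral_norm N A M -> (forall a b, A a b = A b a) -> in_nodes N i ->
  sqrt (sum_to N (fun k => A i k ^ 2)) <= M.
Proof. intros [Hub _] Hsym Hi. apply Hub. exists (fun j => if Nat.eqb j i then 1 else 0). split.
  - unfold vnorm. rewrite (sum_to_ext N _ (fun j => if Nat.eqb j i then 1 else 0)).
    rewrite (sum_to_delta N i (fun _ => 1)) by (unfold in_nodes in Hi; lia). rewrite sqrt_1; lra.
    intros j _; destruct (Nat.eqb j i); ring.
  - unfold vnorm. f_equal. apply sum_to_ext. intros k _. unfold matvec.
    rewrite (sum_to_ext N _ (fun j => if Nat.eqb j i then A k j else 0)).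
    rewrite (sum_to_delta N i (fun j => A k j)) by (unfold in_nodes in Hi; lia). rewrite Hsym; auto.
    intros j _; destruct (Nat.eqb j i); ring. Qed.

Definition upd (p : nat -> R) (i : nat) (y : R) : nat -> R := fun k => if Nat.eqb k i then y else p k.

Lemma volt_upd_p N Rm Xm v0 p q i y k : in_nodes N i ->
  volt N Rm Xm v0 (upd p i y) q k = volt N Rm Xm v0 p q k + Rm k i * (y - p i).
Proof. intros Hi. unfold volt, matvec, upd.
  rewrite (sum_to_update N i (fun j z => Rm k j * z) p y) by (unfold in_nodes in Hi; lia). ring. Qed.

Lemma volt_upd_q N Rm Xm v0 p q i y k : in_nodes N i ->
  volt N Rm Xm v0 p (upd q i y) k = volt N Rm Xm v0 p q k + Xm k i * (y - q i).
Proof. intros Hi. unfold volt, matvec, upd.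
  rewrite (sum_to_update N i (fun j z => Xm k j * z) q y) by (unfold in_nodes in Hi; lia). ring. Qed.

Lemma quad_upd N a b c p i y : in_nodes N i ->
  quad_cost N a b c (upd p i y) = quad_cost N a b c p + ((a i / 2 * y ^ 2 + b i * y) - (a i / 2 * p i ^ 2 + b i * p i)).
Proof. intros Hi. unfold quad_cost, upd.
  rewrite (sum_to_update N i (fun k z => a k / 2 * z ^ 2 + b k * z + c k) p y) by (unfold in_nodes in Hi; lia). ring. Qed.

Lemma lag_upd_p N Rm Xm v0 vlo vhi aP bP cP aQ bQ cQ llo lhi p q i y : in_nodes N i ->
  lagrangian N Rm Xm v0 vlo vhi aP bP cP aQ bQ cQ llo lhi (upd p i y) q -
  lagrangian N Rm Xm v0 vlo vhi aP bP cP aQ bQ cQ llo lhi p q =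
  ((aP i / 2 * y ^ 2 + bP i * y) - (aP i / 2 * p i ^ 2 + bP i * p i)) -
  (y - p i) * sum_to N (fun k => Rm k i * (llo k - lhi k)).
Proof. intros Hi. unfold lagrangian. rewrite quad_upd by auto.
  rewrite (sum_to_ext N (fun k => llo k * (vlo k - volt N Rm Xm v0 (upd p i y) q k))
     (fun k => llo k * (vlo k - volt N Rm Xm v0 p q k) - (y - p i) * (Rm k i * llo k))) by (intros; rewrite volt_upd_p by auto; ring).
  rewrite (sum_to_ext N (fun k => lhi k * (volt N Rm Xm v0 (upd p i y) q k - vhi k))
     (fun k => lhi k * (volt N Rm Xm v0 p q k - vhi k) + (y - p i) * (Rm k i * lhi k))) by (intros; rewrite volt_upd_p by auto; ring).
  rewrite (sum_to_ext N (fun k => Rm k i * (llo k - lhi k)) (fun k => Rm k i * llo k - Rm k i * lhi k)) by (intros; ring).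
  rewrite sum_to_minus, sum_to_plus, !sum_to_minus, !sum_to_scal. ring. Qed.

Lemma lag_upd_q N Rm Xm v0 vlo vhi aP bP cP aQ bQ cQ llo lhi p q i y : in_nodes N i ->
  lagrangian N Rm Xm v0 vlo vhi aP bP cP aQ bQ cQ llo lhi p (upd q i y) -
  lagrangian N Rm Xm v0 vlo vhi aP bP cP aQ bQ cQ llo lhi p q =
  ((aQ i / 2 * y ^ 2 + bQ i * y) - (aQ i / 2 * q i ^ 2 + bQ i * q i)) -
  (y - q i) * sum_to N (fun k => Xm k i * (llo k - lhi k)).
Proof. intros Hi. unfold lagrangian. rewrite (quad_upd N aQ) by auto.
  rewrite (sum_to_ext N (fun k => llo k * (vlo k - volt N Rm Xm v0 p (upd q i y) k))
     (fun k => llo k * (vlo k - volt N Rm Xm v0 p q k) - (y - q i) * (Xm k i * llo k))) by (intros; rewrite volt_upd_q by auto; ring).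
  rewrite (sum_to_ext N (fun k => lhi k * (volt N Rm Xm v0 p (upd q i y) k - vhi k))
     (fun k => lhi k * (volt N Rm Xm v0 p q k - vhi k) + (y - q i) * (Xm k i * lhi k))) by (intros; rewrite volt_upd_q by auto; ring).
  rewrite (sum_to_ext N (fun k => Xm k i * (llo k - lhi k)) (fun k => Xm k i * llo k - Xm k i * lhi k)) by (intros; ring).
  rewrite sum_to_minus, sum_to_plus, !sum_to_minus, !sum_to_scal. ring. Qed.

Lemma lag_affine N Rm Xm v0 vlo vhi aP bP cP aQ bQ cQ llo lhi mlo mhi p q :
  lagrangian N Rm Xm v0 vlo vhi aP bP cP aQ bQ cQ mlo mhi p q -
  lagrangian N Rm Xm v0 vlo vhi aP bP cP aQ bQ cQ llo lhi p q =
  sum_to N (fun k => (vlo k - volt N Rm Xm v0 p q k) * (mlo k - llo k) + (volt N Rm Xm v0 p q k - vhi k) * (mhi k - lhi k)).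
Proof. unfold lagrangian.
  rewrite (sum_to_ext N (fun k => (vlo k - volt N Rm Xm v0 p q k) * (mlo k - llo k) + (volt N Rm Xm v0 p q k - vhi k) * (mhi k - lhi k))
    (fun k => (mlo k * (vlo k - volt N Rm Xm v0 p q k) - llo k * (vlo k - volt N Rm Xm v0 p q k)) + (mhi k * (volt N Rm Xm v0 p q k - vhi k) - lhi k * (volt N Rm Xm v0 p q k - vhi k)))) by (intros; ring).
  rewrite sum_to_plus, !sum_to_minus. ring. Qed.

Lemma sum_to_const n c : sum_to n (fun _ => c) = INR n * c.
Proof. induction n; cbn [sum_to]; [simpl; ring|]. rewrite IHn, S_INR. ring. Qed.

Lemma vnorm_le_const N x M : (forall i, in_nodes N i -> Rabs (x i) <= M) -> vnorm N x <= sqrt (INR N) * M.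
Proof. intros H. destruct N as [|N].
  - unfold vnorm. simpl. rewrite sqrt_0. lra.
  - assert (HM : 0 <= M) by (eapply Rle_trans; [apply Rabs_pos| apply (H 1%nat); unfold in_nodes; lia]).
    unfold vnorm. rewrite <- (sqrt_pow2 M HM). rewrite <- sqrt_mult_alt by apply pos_INR.
    apply sqrt_le_1_alt. rewrite <- sum_to_const. apply sum_to_le. intros i Hi.
    assert (A := H i Hi). rewrite <- (Rsqr_pow2 (x i)), Rsqr_abs, Rsqr_pow2.
    assert (0 <= Rabs (x i)) by apply Rabs_pos. nra. Qed.

Lemma vnorm_ext N x y : (forall i, in_nodes N i -> x i = y i) -> vnorm N x = vnorm N y.
Proof. intros H. unfold vnorm. f_equal. apply sum_to_ext. intros; rewrite H; auto. Qed.

Lemma var_cs N lam (a : nat -> R) M t B : sqrt (sum_to N (fun k => a k ^ 2)) <= M ->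
  sum_to N (fun k => Rabs (a k) * Var lam k t B) <=
  M * sum_lt B (fun m => sqrt (sum_to N (fun k => (at_time lam (t - 1 - Z.of_nat m) k - at_time lam (t - Z.of_nat m) k) ^ 2))).
Proof. intros HM. unfold Var.
  rewrite (sum_to_ext N _ (fun k => sum_lt B (fun m => Rabs (a k) * Rabs (at_time lam (t - 1 - Z.of_nat m) k - at_time lam (t - Z.of_nat m) k)))) by (intros; rewrite sum_lt_scal; auto).
  rewrite sum_exchange. rewrite <- sum_lt_scal. apply sum_lt_le. intros m _.
  eapply Rle_trans. apply CS_abs. apply Rmult_le_compat_r. apply sqrt_pos. auto. Qed.

Lemma dp_bound (z c b a lo hi amin M : R) : 0 < amin -> amin <= a -> lo <= hi -> Rabs (z - c) <= M ->
  Rabs (clamp ((z - b) / a) lo hi - clamp ((c - b) / a) lo hi) <= M / amin.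
Proof. intros Ham Ha Hlh H. eapply Rle_trans. apply clamp_lip; auto.
  replace ((z - b) / a - (c - b) / a) with ((z - c) / a) by (field; lra).
  unfold Rdiv. rewrite Rabs_mult, (Rabs_right (/ a)) by (apply Rle_ge, Rlt_le, Rinv_0_lt_compat; lra).
  assert (0 <= M) by (eapply Rle_trans; [apply Rabs_pos|eauto]).
  assert (/ a <= / amin) by (apply Rinv_le_contravar; lra).
  assert (0 < / a) by (apply Rinv_0_lt_compat; lra).
  assert (Rabs (z - c) * / a <= M * / a) by (apply Rmult_le_compat_r; lra).
  assert (M * / a <= M * / amin) by (apply Rmult_le_compat_l; lra). lra. Qed.

Lemma sqrt_diff_bound N (a b : nat -> R) : sqrt (sum_to N (fun k => (a k - b k) ^ 2)) <= sqrt 2 * sqrt (sum_to N (fun k => a k ^ 2 + b k ^ 2)).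
Proof. rewrite <- sqrt_mult_alt by lra. apply sqrt_le_1_alt. rewrite <- sum_to_scal. apply sum_to_le.
  intros. assert (0 <= (a i + b i)^2) by apply pow2_ge_0. nra. Qed.

Theorem lemma3
  (N : nat) (sigma : nat -> nat) (r x : nat -> R) (v0 : R)
  (vlo vhi plo phi qlo qhi aP bP cP aQ bQ cQ : nat -> R) (gamma : R)
  (tau_max : nat) (tau_up tau_dn : nat -> nat -> nat)
  (p q zP zQ llo lhi lam alpha betaP betaQ alphah betaPh betaQh : nat -> nat -> R)
  (D : (nat -> R) -> (nat -> R) -> R) (d : nat) (amin normR normX : R) :
  is_radial_tree N sigma ->
  (forall k, in_nodes N k -> 0 <= r k /\ 0 <= x k) ->
  (forall i, in_nodes N i -> vlo i <= vhi i /\ plo i <= phi i /\ qlo i <= qhi i) ->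
  (forall i, in_nodes N i -> 0 < aP i /\ 0 < aQ i) ->
  0 < gamma ->
  (forall j t, in_nodes N j -> sigma j <> 0%nat ->
     (tau_up j t <= tau_max)%nat /\ (tau_dn j t <= tau_max)%nat) ->
  dist_opt_run N sigma (Rmat N sigma r) (Rmat N sigma x) v0
    vlo vhi plo phi qlo qhi aP bP aQ bQ gamma tau_up tau_dn
    p q zP zQ llo lhi lam alpha betaP betaQ alphah betaPh betaQh ->
  is_dual_function N (Rmat N sigma r) (Rmat N sigma x) v0
    vlo vhi plo phi qlo qhi aP bP cP aQ bQ cQ D ->
  is_diameter N sigma d ->
  is_amin N aP aQ amin ->
  is_spectral_norm N (Rmat N sigma r) normR ->
  is_spectral_norm N (Rmat N sigma x) normX ->
  forall (t : nat) (Glo Ghi : nat -> R),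
    is_gradient N D (llo t) (lhi t) Glo Ghi ->
    let v := volt N (Rmat N sigma r) (Rmat N sigma x) v0 (p t) (q t) in
    let t0 := (d * (tau_max + 1))%nat in
    let L := 2 * (normR ^ 2 + normX ^ 2) / amin in
    vnorm2 N (fun i => Glo i - (vlo i - v i)) (fun i => Ghi i - (v i - vhi i))
    <= L * sqrt (INR N) *
       sum_lt t0 (fun k =>
         let s := (Z.of_nat t - 1 - Z.of_nat k)%Z in
         vnorm2 N (fun i => at_time llo s i - at_time llo (s + 1) i)
                  (fun i => at_time lhi s i - at_time lhi (s + 1) i)).
Proof.
  intros T Hrx Hbox Hapos Hg Htau Hrun Hdual Hdiam Hamin HnR HnX t Glo Ghi Hgrad v t0 L.
  pose proof Hrun as [Hinit [Hroot Hstep]].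
  assert (SP : Side N sigma r tau_max tau_up tau_dn lam alpha alphah betaP betaPh zP).
  { split; [|split; [|split; [|split; [|split; [|split]]]]].
    - intros i Hi. destruct (Hinit i Hi) as (?&?&?&?&?&?&?&?&?&?&?). tauto.
    - intros i t' Hi Hs. apply (Hroot i t' Hi Hs).
    - intros t' i Hi. apply (Hstep t' i Hi).
    - intros t' i j Hi Hj Ej. apply (Hstep t' i Hi). auto. auto.
    - intros t' i Hi Hs. destruct (Hstep t' i Hi) as (_&_&_&_&_&_&_&H&_). destruct (H Hs) as (?&?&?). auto.
    - intros t' i Hi. apply (Hstep t' i Hi).
    - auto. }
  assert (SQ : Side N sigma x tau_max tau_up tau_dn lam alpha alphah betaQ betaQh zQ).
  { split; [|split; [|split; [|split; [|split; [|split]]]]].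
    - intros i Hi. destruct (Hinit i Hi) as (?&?&?&?&?&?&?&?&?&?&?). tauto.
    - intros i t' Hi Hs. apply (Hroot i t' Hi Hs).
    - intros t' i Hi. apply (Hstep t' i Hi).
    - intros t' i j Hi Hj Ej. apply (Hstep t' i Hi). auto. auto.
    - intros t' i Hi Hs. destruct (Hstep t' i Hi) as (_&_&_&_&_&_&_&H&_). destruct (H Hs) as (?&?&?). auto.
    - intros t' i Hi. apply (Hstep t' i Hi).
    - auto. }
  assert (lamfact : forall n k, in_nodes N k -> lam n k = llo n k - lhi n k).
  { intros n k Hk. destruct n as [|n].
    - destruct (Hinit k Hk) as (?&?&?&?&?&?). rewrite H1, H2, H3. ring.
    - apply (Hstep n k Hk). }
  assert (atlam : forall s k, in_nodes N k -> at_time lam s k = at_time llo s k - at_time lhi s k).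
  { intros s k Hk. unfold at_time. destruct (s <? 0)%Z. ring. apply lamfact; auto. }
  assert (Hphi : forall i k, in_nodes N i -> in_nodes N k -> (S tau_max * tphi sigma k i <= t0)%nat).
  { intros i k Hi Hk. assert (A := phi_diam N sigma d i k T Hdiam Hi Hk). unfold t0.
    nia. }
  assert (ZPg : forall i, in_nodes N i -> Good N lam (zP t i) (fun k => Rmat N sigma r i k) (Z.of_nat t) (fun _ => t0)).
  { intros i Hi. eapply Good_weaken; [|apply (Zgood N sigma r tau_max tau_up tau_dn lam alpha alphah betaP betaPh zP T SP t i Hi)].
    intros k Hk _. apply Hphi; auto. }
  assert (ZQg : forall i, in_nodes N i -> Good N lam (zQ t i) (fun k => Rmat N sigma x i k) (Z.of_nat t) (fun _ => t0)).
  { intros i Hi. eapply Good_weaken; [|apply (Zgood N sigma x tau_max tau_up tau_dn lam alpha alphah betaQ betaQh zQ T SQ t i Hi)].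
    intros k Hk _. apply Hphi; auto. }
  destruct (Hdual (llo t) (lhi t)) as [[ph [qh [Hph [Hqh HD]]]] _].
  assert (HphE : forall i, in_nodes N i -> ph i = clamp ((sum_to N (fun k => Rmat N sigma r k i * (llo t k - lhi t k)) - bP i) / aP i) (plo i) (phi i)).
  { intros i Hi. apply argmin_clamp. apply Hapos; auto. apply Hbox; auto. apply Hph; auto.
    intros y Hy. destruct (Hdual (llo t) (lhi t)) as [_ Hmin].
    assert (M := Hmin (upd ph i y) qh).
    assert (Hb : in_box N plo phi (upd ph i y)).
    { intros k Hk. unfold upd. destruct (Nat.eqb_spec k i). subst; auto. apply Hph; auto. }
    specialize (M Hb Hqh). rewrite HD in M.
    assert (E := lag_upd_p N (Rmat N sigma r) (Rmat N sigma x) v0 vlo vhi aP bP cP aQ bQ cQ (llo t) (lhi t) ph qh i y Hi).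
    lra. }
  assert (HqhE : forall i, in_nodes N i -> qh i = clamp ((sum_to N (fun k => Rmat N sigma x k i * (llo t k - lhi t k)) - bQ i) / aQ i) (qlo i) (qhi i)).
  { intros i Hi. apply argmin_clamp. apply Hapos; auto. apply Hbox; auto. apply Hqh; auto.
    intros y Hy. destruct (Hdual (llo t) (lhi t)) as [_ Hmin].
    assert (M := Hmin ph (upd qh i y)).
    assert (Hb : in_box N qlo qhi (upd qh i y)).
    { intros k Hk. unfold upd. destruct (Nat.eqb_spec k i). subst; auto. apply Hqh; auto. }
    specialize (M Hph Hb). rewrite HD in M.
    assert (E := lag_upd_q N (Rmat N sigma r) (Rmat N sigma x) v0 vlo vhi aP bP cP aQ bQ cQ (llo t) (lhi t) ph qh i y Hi).
    lra. }
  set (vh := volt N (Rmat N sigma r) (Rmat N sigma x) v0 ph qh).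
  assert (HG : forall i, in_nodes N i -> Glo i = vlo i - vh i /\ Ghi i = vh i - vhi i).
  { apply (grad_unique N D (llo t) (lhi t) Glo Ghi (fun k => vlo k - vh k) (fun k => vh k - vhi k) Hgrad).
    intros mlo mhi. destruct (Hdual mlo mhi) as [_ Hm]. specialize (Hm ph qh Hph Hqh). rewrite HD.
    assert (E := lag_affine N (Rmat N sigma r) (Rmat N sigma x) v0 vlo vhi aP bP cP aQ bQ cQ (llo t) (lhi t) mlo mhi ph qh).
    fold vh in E. lra. }
  destruct Hamin as [Hale [i0 [Hi0 Hae]]].
  assert (Hamp : 0 < amin) by (destruct (Hapos i0 Hi0); destruct Hae; subst; lra).
  assert (HR0 := spec_nonneg _ _ _ HnR). assert (HX0 := spec_nonneg _ _ _ HnX).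
  set (S := sum_lt t0 (fun k => let s := (Z.of_nat t - 1 - Z.of_nat k)%Z in
     vnorm2 N (fun i => at_time llo s i - at_time llo (s + 1) i) (fun i => at_time lhi s i - at_time lhi (s + 1) i))).
  assert (Hwin : sum_lt t0 (fun m => sqrt (sum_to N (fun k => (at_time lam (Z.of_nat t - 1 - Z.of_nat m) k - at_time lam (Z.of_nat t - Z.of_nat m) k) ^ 2))) <= sqrt 2 * S).
  { unfold S. rewrite <- sum_lt_scal. apply sum_lt_le. intros m _. cbv zeta.
    replace (Z.of_nat t - 1 - Z.of_nat m + 1)%Z with (Z.of_nat t - Z.of_nat m)%Z by lia.
    rewrite (sum_to_ext N _ (fun k => ((at_time llo (Z.of_nat t - 1 - Z.of_nat m) k - at_time llo (Z.of_nat t - Z.of_nat m) k) - (at_time lhi (Z.of_nat t - 1 - Z.of_nat m) k - at_time lhi (Z.of_nat t - Z.of_nat m) k)) ^ 2)).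
    apply sqrt_diff_bound.
    intros k Hk. rewrite !atlam by auto. f_equal. ring. }
  assert (HS0 : 0 <= S) by (unfold S; apply sum_lt_nonneg; intros; apply sqrt_pos).
  set (MP := normR * (sqrt 2 * S) / amin). set (MQ := normX * (sqrt 2 * S) / amin).
  assert (HdP : forall i, in_nodes N i -> Rabs (p t i - ph i) <= MP).
  { intros i Hi. destruct (Hstep t i Hi) as (Hp & _). rewrite Hp, HphE by auto.
    apply dp_bound; auto. apply Hale; auto. apply Hbox; auto.
    assert (G := ZPg i Hi). unfold Good in G.
    rewrite (sum_to_ext N (fun k => Rmat N sigma r i k * at_time lam (Z.of_nat t) k) (fun k => Rmat N sigma r k i * (llo t k - lhi t k))) in G
      by (intros k Hk; rewrite at_time_nat, lamfact, Rmat_sym by auto; auto).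
    eapply Rle_trans; [apply G|].
    eapply Rle_trans; [apply (var_cs N lam (fun k => Rmat N sigma r i k) normR)|].
    apply row_bound; auto. intros; apply Rmat_sym.
    apply Rmult_le_compat_l; auto. }
  assert (HdQ : forall i, in_nodes N i -> Rabs (q t i - qh i) <= MQ).
  { intros i Hi. destruct (Hstep t i Hi) as (_ & Hq & _). rewrite Hq, HqhE by auto.
    apply dp_bound; auto. apply Hale; auto. apply Hbox; auto.
    assert (G := ZQg i Hi). unfold Good in G.
    rewrite (sum_to_ext N (fun k => Rmat N sigma x i k * at_time lam (Z.of_nat t) k) (fun k => Rmat N sigma x k i * (llo t k - lhi t k))) in G
      by (intros k Hk; rewrite at_time_nat, lamfact, Rmat_sym by auto; auto).
    eapply Rle_trans; [apply G|].
    eapply Rle_trans; [apply (var_cs N lam (fun k => Rmat N sigma x i k) normX)|].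
    apply row_bound; auto. intros; apply Rmat_sym.
    apply Rmult_le_compat_l; auto. }
  set (dP := fun k => p t k - ph k). set (dQ := fun k => q t k - qh k).
  assert (Hv : vnorm2 N (fun i => Glo i - (vlo i - v i)) (fun i => Ghi i - (v i - vhi i)) =
     sqrt 2 * vnorm N (fun i => matvec N (Rmat N sigma r) dP i + matvec N (Rmat N sigma x) dQ i)).
  { unfold vnorm2, vnorm. rewrite <- sqrt_mult_alt by lra. f_equal. rewrite <- sum_to_scal.
    apply sum_to_ext. intros i Hi. destruct (HG i Hi) as [-> ->].
    assert (E : v i - vh i = matvec N (Rmat N sigma r) dP i + matvec N (Rmat N sigma x) dQ i).
    { unfold v, vh, volt, matvec, dP, dQ.
      rewrite (sum_to_ext N (fun j => Rmat N sigma r i j * (p t j - ph j)) (fun j => Rmat N sigma r i j * p t j - Rmat N sigma r i j * ph j)) by (intros; ring).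
      rewrite (sum_to_ext N (fun j => Rmat N sigma x i j * (q t j - qh j)) (fun j => Rmat N sigma x i j * q t j - Rmat N sigma x i j * qh j)) by (intros; ring).
      rewrite !sum_to_minus. ring. }
    rewrite <- E. ring. }
  rewrite Hv.
  assert (B1 := minkowski N (matvec N (Rmat N sigma r) dP) (matvec N (Rmat N sigma x) dQ)).
  assert (B2 := spec_bound N _ _ dP HnR). assert (B3 := spec_bound N _ _ dQ HnX).
  assert (B4 : vnorm N dP <= sqrt (INR N) * MP) by (apply vnorm_le_const; intros; apply HdP; auto).
  assert (B5 : vnorm N dQ <= sqrt (INR N) * MQ) by (apply vnorm_le_const; intros; apply HdQ; auto).
  assert (Hs2 : sqrt 2 * sqrt 2 = 2) by (apply sqrt_sqrt; lra).
  assert (Hs2p : 0 <= sqrt 2) by apply sqrt_pos. assert (HsN : 0 <= sqrt (INR N)) by apply sqrt_pos.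
  assert (C1 : normR * vnorm N dP <= normR * (sqrt (INR N) * MP)) by (apply Rmult_le_compat_l; auto).
  assert (C2 : normX * vnorm N dQ <= normX * (sqrt (INR N) * MQ)) by (apply Rmult_le_compat_l; auto).
  assert (C3 : vnorm N (fun i => matvec N (Rmat N sigma r) dP i + matvec N (Rmat N sigma x) dQ i) <= normR * (sqrt (INR N) * MP) + normX * (sqrt (INR N) * MQ)) by lra.
  assert (C4 := Rmult_le_compat_l (sqrt 2) _ _ Hs2p C3).
  eapply Rle_trans; [apply C4|]. right. unfold L, MP, MQ. field_simplify; [|lra|lra].
  replace (sqrt 2 ^ 2) with 2 by (simpl; rewrite Rmult_1_r; auto). reflexivity. Qed.
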